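(* Fix one of the types I–V with data $J$, $(\phi_j)$, $(n_j)$ as in the context, and let $H$ be continuous on $\mathbb{R}$. Let $i\in J$. Then there exists a unique local solution $\mathbf{x}(s)$ (defined for $s$ near $0$) of $$\mathbf{x}''(s)^\perp\cdot\mathbf{x}'(s)+\sum_{j\in J}\frac{n_j\,\mathbf{e}(\phi_j)\cdot\mathbf{x}'(s)}{\mathbf{e}(\phi_j)^\perp\cdot\mathbf{x}(s)}=(n-1)H(s),\qquad \|\mathbf{x}'(s)\|^2=1,$$ satisfying the initial conditions $$\mathbf{e}(\phi_i)^\perp\cdot\mathbf{x}(0)=0,\qquad \mathbf{x}(0)\neq\mathbf{0},\qquad \mathbf{x}'(0)=\mathbf{e}\!\left(\phi_i+\tfrac{\pi}{2}\right).$$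
   Context: For $\mathbf{a}=(a,b)\in\mathbb{R}^2$ write $\mathbf{a}^\perp=(-b,a)$; $\mathbf{e}(\phi)=(\cos\phi,\sin\phi)$, $\mathbf{e}(\phi)^\perp=(-\sin\phi,\cos\phi)$. Type data ($\sum_j n_j=n-2$): Type I: $J=\{0\}$, $\phi_0=0$, $n_0=n-2$, $n\ge3$. Type II: $J=\{0,1\}$, $\phi_0=0$, $\phi_1=\pi/2$, $n_0=m$, $n_1=\ell$ ($n=\ell+m+2$, $\ell,m\in\mathbb{N}$). Type III: $J=\{-1,0,1\}$, $\phi_j=j\pi/3$, $n_j\equiv c$ with $c\in\{1,2,4,8\}$ ($n=5,8,14,26$). Type IV: $J=\{-1,0,1,2\}$, $\phi_j=j\pi/4$, $n_{\pm1}=\ell$, $n_0=n_2=k$, $(k,\ell)\in\{(2,2),(5,4),(9,6),(m-2,1),(2m-3,2),(4m-5,4)\}$. Type V: $J=\{-2,\dots,3\}$, $\phi_j=j\pi/6$, $n_j\equiv c$ with $c\in\{1,2\}$. The equation is singular where $\mathbf{e}(\phi_j)^\perp\cdot\mathbf{x}=0$ for some $j$; the initial point lies on such a line. *)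

(* Defs.v *)
From Stdlib Require Import Reals Lra Lia List.
From Coquelicot Require Import Coquelicot.
Import ListNotations.
Open Scope R_scope.

Definition pt := (R * R)%type.
Definition dot (a b : pt) : R := fst a * fst b + snd a * snd b.
Definition perp (a : pt) : pt := (- snd a, fst a).
Definition e (phi : R) : pt := (cos phi, sin phi).

Definition dcurve (x : R -> pt) (t : R) : pt :=
  (Derive (fun u => fst (x u)) t, Derive (fun u => snd (x u)) t).

(* The data J, (phi_j), (n_j) of Types I--V, encoded as a list of pairs
   (phi_j, n_j), together with n (so that sum_j n_j = n - 2). *)
Inductive type_data : list (R * nat) -> nat -> Prop :=
| TypeI (n : nat) :
    (3 <= n)%nat -> type_data [(0, (n - 2)%nat)] n
| TypeII (l m : nat) :
    (1 <= l)%nat -> (1 <= m)%nat ->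
    type_data [(0, m); (PI / 2, l)] (l + m + 2)
| TypeIII (c : nat) :
    (c = 1 \/ c = 2 \/ c = 4 \/ c = 8)%nat ->
    type_data [(-1 * PI / 3, c); (0 * PI / 3, c); (1 * PI / 3, c)] (3 * c + 2)
| TypeIV (k l : nat) :
    ((k = 2 /\ l = 2) \/ (k = 5 /\ l = 4) \/ (k = 9 /\ l = 6) \/
     (exists m : nat, (1 <= k)%nat /\
        ((k = m - 2 /\ l = 1) \/ (k = 2 * m - 3 /\ l = 2) \/ (k = 4 * m - 5 /\ l = 4))))%nat ->
    type_data [(-1 * PI / 4, l); (0 * PI / 4, k); (1 * PI / 4, l); (2 * PI / 4, k)]
              (2 * k + 2 * l + 2)
| TypeV (c : nat) :
    (c = 1 \/ c = 2)%nat ->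
    type_data [(-2 * PI / 6, c); (-1 * PI / 6, c); (0 * PI / 6, c);
               (1 * PI / 6, c); (2 * PI / 6, c); (3 * PI / 6, c)] (6 * c + 2).

Definition sing_sum (J : list (R * nat)) (x v : pt) : R :=
  fold_right (fun p acc =>
    INR (snd p) * dot (e (fst p)) v / dot (perp (e (fst p))) x + acc) 0 J.

Definition C2_on (eps : R) (x : R -> pt) : Prop :=
  forall s, Rabs s < eps ->
    ex_derive (fun u => fst (x u)) s /\ ex_derive (fun u => snd (x u)) s /\
    ex_derive (fun u => fst (dcurve x u)) s /\ ex_derive (fun u => snd (dcurve x u)) s /\
    continuous (fun u => fst (dcurve (dcurve x) u)) s /\
    continuous (fun u => snd (dcurve (dcurve x) u)) s.

(* x is a C^2 solution on (-eps, eps) of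
     x''^perp . x' + sum_j n_j (e_j . x')/(e_j^perp . x) = (n-1) H(s),  |x'|^2 = 1,
   the ODE being required away from the singular time s = 0, where all the
   denominators are nonzero. *)
Definition is_local_solution (J : list (R * nat)) (n : nat) (H : R -> R)
    (eps : R) (x : R -> pt) : Prop :=
  0 < eps /\ C2_on eps x /\
  (forall s, Rabs s < eps -> dot (dcurve x s) (dcurve x s) = 1) /\
  (forall s, 0 < Rabs s < eps ->
     (forall p, In p J -> dot (perp (e (fst p))) (x s) <> 0) /\
     dot (perp (dcurve (dcurve x) s)) (dcurve x s) + sing_sum J (x s) (dcurve x s)
       = (INR n - 1) * H s).

(* Submission.v *)
Require Import Defs.
From Stdlib Require Import Reals List Lra Lia.
From Coquelicot Require Import Coquelicot.
Open Scope R_scope.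

Lemma cpt (f : R -> R) x : continuity_pt f x -> continuous f x.
Proof. intro; now apply continuity_pt_filterlim. Qed.
Lemma ptc (f : R -> R) x : continuous f x -> continuity_pt f x.
Proof. intro; now apply continuity_pt_filterlim. Qed.

Lemma c_plus (f g : R -> R) x : continuous f x -> continuous g x -> continuous (fun t => f t + g t) x.
Proof. intros; exact (continuous_plus f g x H H0). Qed.
Lemma c_mult (f g : R -> R) x : continuous f x -> continuous g x -> continuous (fun t => f t * g t) x.
Proof. intros; exact (continuous_mult f g x H H0). Qed.
Lemma c_opp (f : R -> R) x : continuous f x -> continuous (fun t => - f t) x.
Proof. intros; exact (continuous_opp f x H). Qed.
Lemma c_minus (f g : R -> R) x : continuous f x -> continuous g x -> continuous (fun t => f t - g t) x.
Proof. intros; apply c_plus; auto; apply c_opp; auto. Qed.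
Lemma c_const (c x : R) : continuous (fun _ : R => c) x.
Proof. apply continuous_const. Qed.
Lemma c_id (x : R) : continuous (fun t : R => t) x.
Proof. apply continuous_id. Qed.
Lemma c_comp (f g : R -> R) x : continuous f x -> continuous g (f x) -> continuous (fun t => g (f t)) x.
Proof. intros; exact (continuous_comp f g x H H0). Qed.
Lemma c_cos (f : R -> R) x : continuous f x -> continuous (fun t => cos (f t)) x.
Proof. intros; apply c_comp; auto; apply cpt; apply continuity_cos. Qed.
Lemma c_sin (f : R -> R) x : continuous f x -> continuous (fun t => sin (f t)) x.
Proof. intros; apply c_comp; auto; apply cpt; apply continuity_sin. Qed.
Lemma c_inv (f : R -> R) x : continuous f x -> f x <> 0 -> continuous (fun t => / f t) x.
Proof. intros; apply cpt. apply (continuity_pt_inv f x); auto; now apply ptc. Qed.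
Lemma c_div (f g : R -> R) x : continuous f x -> continuous g x -> g x <> 0 ->
  continuous (fun t => f t / g t) x.
Proof. intros; apply c_mult; auto; now apply c_inv. Qed.
Lemma c_pow (f : R -> R) (k : nat) x : continuous f x -> continuous (fun t => f t ^ k) x.
Proof. intros; induction k; simpl. apply c_const. apply c_mult; auto. Qed.

Lemma loc_of (x r : R) (P : R -> Prop) : 0 < r -> (forall y, Rabs (y - x) < r -> P y) -> locally x P.
Proof. intros Hr HP. exists (mkposreal r Hr). intros y Hy. apply HP. exact Hy. Qed.

Lemma cont_ed (f : R -> R) x :
  (forall eps, 0 < eps -> exists del, 0 < del /\ forall y, Rabs (y - x) < del -> Rabs (f y - f x) <= eps) ->
  continuous f x.
Proof.
  intro Hed. apply cpt. intros eps Heps. destruct (Hed (eps/2)) as [d [Hd Hy]]; [lra|].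
  exists d; split; auto. intros y [_ Hy2]. simpl in *. unfold R_dist in *.
  specialize (Hy y Hy2). lra.
Qed.
Lemma ed_cont (f : R -> R) x : continuous f x ->
  forall eps, 0 < eps -> exists del, 0 < del /\ forall y, Rabs (y - x) < del -> Rabs (f y - f x) <= eps.
Proof.
  intros Hc eps Heps. apply ptc in Hc. destruct (Hc eps Heps) as [d [Hd Hy]].
  exists d; split; auto. intros y Hyx. destruct (Req_dec y x) as [->|Hne].
  rewrite Rminus_eq_0, Rabs_R0; lra.
  left. apply (Hy y). split. split; [exact I| auto]. exact Hyx.
Qed.

Lemma RInt_pow (k : nat) (s : R) : RInt (fun t => t ^ k) 0 s = s ^ (S k) / INR (S k).
Proof.
  apply is_RInt_unique.
  assert (Hc : INR (S k) <> 0) by (apply not_0_INR; lia).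
  assert (Hc2 : INR (S k) = INR k + 1) by (rewrite S_INR; auto).
  assert (H := is_RInt_derive (fun t => t ^ (S k) / INR (S k)) (fun t => t ^ k) 0 s).
  replace (s ^ S k / INR (S k)) with (minus (s ^ S k / INR (S k)) (0 ^ S k / INR (S k))).
  apply H.
  - intros x _. auto_derive; auto. rewrite Hc2 in *. destruct k; simpl; field; auto.
  - intros; apply c_pow, c_id.
  - unfold minus, plus, opp; simpl. field. auto.
Qed.

Lemma ex_RInt_sym (f : R -> R) s : (forall t, Rabs t <= Rabs s -> continuous f t) -> ex_RInt f 0 s.
Proof.
  intros Hc. apply (@ex_RInt_continuous R_CompleteNormedModule). intros z Hz. apply Hc.
  unfold Rmin, Rmax in Hz. destruct (Rle_dec 0 s); unfold Rabs;
  repeat destruct Rcase_abs; lra.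
Qed.

Lemma RInt_abs_bound (f : R -> R) s B : (forall t, Rabs t <= Rabs s -> continuous f t) ->
  (forall t, Rabs t <= Rabs s -> Rabs (f t) <= B) -> Rabs (RInt f 0 s) <= Rabs s * B.
Proof.
  intros Hc Hb. destruct (Rle_dec 0 s).
  - rewrite (Rabs_right s) by lra. replace (s * B) with ((s - 0) * B) by ring.
    apply abs_RInt_le_const; auto. apply ex_RInt_sym; auto.
    intros t Ht. apply Hb. unfold Rabs; repeat destruct Rcase_abs; lra.
  - rewrite <- opp_RInt_swap. 2:{ apply ex_RInt_swap, ex_RInt_sym; auto. }
    change (Rabs (- RInt f s 0) <= Rabs s * B). rewrite Rabs_Ropp.
    rewrite (Rabs_left s) by lra. replace (- s * B) with ((0 - s) * B) by ring.
    apply abs_RInt_le_const; try lra.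
    apply ex_RInt_swap, ex_RInt_sym; auto.
    intros t Ht. apply Hb. unfold Rabs; repeat destruct Rcase_abs; lra.
Qed.

Definition W (k : nat) (f : R -> R) (s : R) : R :=
  if Req_EM_T s 0 then f 0 / INR (S k) else RInt (fun t => t ^ k * f t) 0 s / s ^ (S k).

Lemma INRS_pos k : 0 < INR (S k).
Proof. apply lt_0_INR; lia. Qed.

Lemma cont_powf (f : R -> R) k s : (forall t, Rabs t <= Rabs s -> continuous f t) ->
   forall t, Rabs t <= Rabs s -> continuous (fun t => t ^ k * f t) t.
Proof. intros Hc t Ht. apply c_mult; auto. apply c_pow, c_id. Qed.

Lemma RInt_lin (f : R -> R) k c s : (forall t, Rabs t <= Rabs s -> continuous f t) ->
  RInt (fun t => t ^ k * (f t - c)) 0 s = RInt (fun t => t ^ k * f t) 0 s - c * (s ^ (S k) / INR (S k)).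
Proof.
  intros Hc. rewrite <- RInt_pow.
  assert (E1 : ex_RInt (fun t => t ^ k * f t) 0 s) by (apply ex_RInt_sym, cont_powf; auto).
  assert (E2 : ex_RInt (fun t => t ^ k) 0 s) by (apply ex_RInt_sym; intros; apply c_pow, c_id).
  rewrite (RInt_ext _ (fun t => minus (t ^ k * f t) (scal c (t ^ k)))).
  2:{ intros; unfold minus, plus, opp, scal; simpl; unfold mult; simpl; ring. }
  rewrite (@RInt_minus R_CompleteNormedModule); auto. rewrite (@RInt_scal R_CompleteNormedModule); auto.
  apply (@ex_RInt_scal R_CompleteNormedModule); auto.
Qed.

Lemma W_bound (f : R -> R) k s c D : (forall t, Rabs t <= Rabs s -> continuous f t) ->
  (forall t, Rabs t <= Rabs s -> Rabs (f t - c) <= D) ->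
  Rabs (W k f s - c / INR (S k)) <= D.
Proof.
  intros Hc Hb. assert (HS := INRS_pos k).
  assert (HD : 0 <= D) by (eapply Rle_trans; [apply Rabs_pos| apply (Hb 0)]; rewrite Rabs_R0; apply Rabs_pos).
  unfold W. destruct (Req_EM_T s 0) as [->|Hs].
  - replace (f 0 / INR (S k) - c / INR (S k)) with ((f 0 - c) / INR (S k)) by (field; lra).
    unfold Rdiv; rewrite Rabs_mult, Rabs_inv, (Rabs_right (INR _)) by lra.
    assert (H0 := Hb 0 (Rle_refl _)).
    apply Rle_trans with (D * / INR (S k)). apply Rmult_le_compat_r; auto. left; apply Rinv_0_lt_compat; lra.
    assert (1 <= INR (S k)) by (apply (le_INR 1); lia).
    apply Rle_trans with (D * / 1). apply Rmult_le_compat_l; auto. apply Rinv_le_contravar; lra. lra.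
  - assert (Hp : s ^ S k <> 0) by (apply pow_nonzero; auto).
    replace (RInt (fun t => t ^ k * f t) 0 s / s ^ S k - c / INR (S k))
      with (RInt (fun t => t ^ k * (f t - c)) 0 s / s ^ S k).
    2:{ rewrite RInt_lin; auto. field; split; lra. }
    unfold Rdiv; rewrite Rabs_mult, Rabs_inv, <- RPow_abs.
    assert (Has : 0 < Rabs s) by (apply Rabs_pos_lt; auto).
    apply Rle_trans with ((Rabs s * (Rabs s ^ k * D)) * / Rabs s ^ S k).
    + apply Rmult_le_compat_r. left; apply Rinv_0_lt_compat, pow_lt; auto.
      apply RInt_abs_bound. apply cont_powf; auto. intros t Ht; apply c_minus; [auto|apply c_const].
      intros t Ht. rewrite Rabs_mult, <- RPow_abs. apply Rmult_le_compat; auto.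
      apply pow_le, Rabs_pos. apply Rabs_pos. apply pow_incr; split; auto; apply Rabs_pos.
    + simpl. right. field. split; [|lra]. apply pow_nonzero; lra.
Qed.

Lemma W_minus (f g : R -> R) k s : (forall t, Rabs t <= Rabs s -> continuous f t) ->
  (forall t, Rabs t <= Rabs s -> continuous g t) ->
  W k f s - W k g s = W k (fun t => f t - g t) s.
Proof.
  intros Hf Hg. unfold W. destruct (Req_EM_T s 0). field. apply Rgt_not_eq, INRS_pos.
  assert (E : RInt (fun t => t ^ k * (f t - g t)) 0 s = RInt (fun t => t ^ k * f t) 0 s - RInt (fun t => t ^ k * g t) 0 s).
  { rewrite <- (@RInt_minus R_CompleteNormedModule). apply RInt_ext. intros; unfold minus, plus, opp; simpl; ring.
    apply ex_RInt_sym, cont_powf; auto. apply ex_RInt_sym, cont_powf; auto. }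
  rewrite E. field. apply pow_nonzero; auto.
Qed.

Lemma RInt_cont (g : R -> R) d s : (forall t, Rabs t < d -> continuous g t) -> Rabs s < d ->
  continuous (fun y => RInt g 0 y) s.
Proof.
  intros Hc Hs. apply (@ex_derive_continuous R_AbsRing R_NormedModule). exists (g s).
  apply (is_derive_RInt g (fun y => RInt g 0 y) 0 s); auto.
  apply (loc_of s (d - Rabs s)); [lra|]. intros y Hy. apply (@RInt_correct R_CompleteNormedModule).
  apply ex_RInt_sym. intros t Ht. apply Hc.
  assert (Rabs y < d). { replace y with ((y - s) + s) by ring. eapply Rle_lt_trans. apply Rabs_triang. lra. }
  lra.
Qed.

Lemma W_cont (f : R -> R) k d s : (forall t, Rabs t < d -> continuous f t) -> Rabs s < d ->
  continuous (W k f) s.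
Proof.
  intros Hc Hs. destruct (Req_dec s 0) as [->|Hs0].
  - apply cont_ed. intros eps Heps.
    destruct (ed_cont f 0 (Hc 0 Hs) eps Heps) as [del [Hdel Hy]].
    exists (Rmin del d). split. apply Rmin_pos; auto. rewrite Rabs_R0 in Hs; lra.
    intros y Hy0. rewrite Rminus_0_r in Hy0.
    assert (Hm1 := Rmin_l del d). assert (Hm2 := Rmin_r del d).
    unfold W at 2. destruct (Req_EM_T 0 0); [|congruence].
    apply W_bound. intros t Ht; apply Hc; lra.
    intros t Ht. apply Hy. rewrite Rminus_0_r; lra.
  - apply (continuous_ext_loc _ (fun y => RInt (fun t => t ^ k * f t) 0 y / y ^ S k)).
    + apply (loc_of s (Rmin (Rabs s) (d - Rabs s))). apply Rmin_pos; [apply Rabs_pos_lt|]; lra.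
      intros y Hy. unfold W. destruct (Req_EM_T y 0) as [->|]; auto.
      assert (Hm1 := Rmin_l (Rabs s) (d - Rabs s)). rewrite Rminus_0_l, Rabs_Ropp in Hy. lra.
    + apply c_div. apply (RInt_cont _ d); auto. intros; apply c_mult; auto. apply c_pow, c_id.
      apply c_pow, c_id. apply pow_nonzero; auto.
Qed.

Definition Sset (d M : R) (b : R -> R) : Prop :=
  forall t, Rabs t < d -> continuous b t /\ Rabs (b t) <= M.

Lemma half_pow_small (C eps : R) : 0 < eps -> exists k, C * (/2) ^ k < eps.
Proof.
  intros He. destruct (Rle_dec C 0). exists 0%nat. simpl; lra.
  destruct (pow_lt_1_zero (/2) ltac:(rewrite Rabs_right; lra) (eps / C) ltac:(apply Rdiv_lt_0_compat; lra)) as [N HN].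
  exists N. specialize (HN N (le_n _)). rewrite Rabs_right in HN by (apply Rle_ge, pow_le; lra).
  apply (Rmult_lt_compat_l C) in HN; [|lra]. replace (C * (eps / C)) with eps in HN by (field; lra). lra.
Qed.

Lemma le_all_eps (x : R) : (forall eps, 0 < eps -> x <= eps) -> x <= 0.
Proof. intros H. destruct (Rle_dec x 0); auto. specialize (H (x/2)). lra. Qed.

Lemma le_half_pow (x C : R) : (forall k, x <= C * (/2) ^ k) -> x <= 0.
Proof.
  intros H. apply le_all_eps. intros eps He. destruct (half_pow_small C eps He) as [k Hk].
  specialize (H k). lra.
Qed.

Lemma fixed_point (d M : R) (T : (R -> R) -> (R -> R)) (b0 : R -> R) :
  0 < d -> Sset d M b0 ->
  (forall b, Sset d M b -> Sset d M (T b)) ->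
  (forall b1 b2 D, Sset d M b1 -> Sset d M b2 -> (forall t, Rabs t < d -> Rabs (b1 t - b2 t) <= D) ->
       forall t, Rabs t < d -> Rabs (T b1 t - T b2 t) <= D / 2) ->
  exists b, Sset d M b /\ forall t, Rabs t < d -> T b t = b t.
Proof.
  intros Hd H0 HT Hc.
  set (f := fun k => Nat.iter k T b0).
  assert (Hf : forall k, Sset d M (f k)). { induction k; simpl; auto. }
  assert (HM : 0 <= M). { destruct (H0 0) as [_ HH]. rewrite Rabs_R0; lra. eapply Rle_trans; [apply Rabs_pos|apply HH]. }
  assert (Hstep : forall k t, Rabs t < d -> Rabs (f (S k) t - f k t) <= 2 * M * (/2) ^ k).
  { induction k; intros t Ht.
    - simpl. destruct (Hf 1%nat t Ht) as [_ A]. destruct (H0 t Ht) as [_ B]. simpl in A.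
      eapply Rle_trans. apply Rabs_triang. rewrite Rabs_Ropp. lra.
    - change (Rabs (T (f (S k)) t - T (f k) t) <= 2 * M * (/ 2) ^ S k).
      replace (2 * M * (/ 2) ^ S k) with ((2 * M * (/ 2) ^ k) / 2) by (simpl; field).
      apply Hc; auto. }
  assert (Hgap : forall k j t, Rabs t < d -> Rabs (f (k + j)%nat t - f k t) <= 4 * M * (/2) ^ k - 4 * M * (/2) ^ (k + j)).
  { intros k j t Ht. induction j.
    - rewrite Nat.add_0_r, Rminus_eq_0, Rabs_R0. lra.
    - replace (f (k + S j)%nat t - f k t) with ((f (S (k + j)) t - f (k + j)%nat t) + (f (k + j)%nat t - f k t))
        by (rewrite Nat.add_succ_r; ring).
      eapply Rle_trans. apply Rabs_triang. rewrite Nat.add_succ_r.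
      assert (A := Hstep (k + j)%nat t Ht). assert (E: (/2)^(S (k+j)) = /2 * (/2)^(k+j)) by reflexivity. rewrite E. lra. }
  assert (Hgap' : forall k m t, (k <= m)%nat -> Rabs t < d -> Rabs (f m t - f k t) <= 4 * M * (/2) ^ k).
  { intros k m t Hkm Ht. replace m with (k + (m - k))%nat by lia.
    eapply Rle_trans. apply Hgap; auto. assert (0 <= 4 * M * (/2) ^ (k + (m - k))).
    apply Rmult_le_pos; [lra| apply pow_le; lra]. lra. }
  assert (Hcv : forall t, Rabs t < d -> ex_finite_lim_seq (fun k => f k t)).
  { intros t Ht. apply ex_lim_seq_cauchy_corr. intros eps.
    destruct (half_pow_small (8 * M) eps (cond_pos eps)) as [N HN].
    exists N. intros n m Hn Hm.
    replace (f n t - f m t) with ((f n t - f N t) - (f m t - f N t)) by ring.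
    assert (A := Hgap' N n t Hn Ht). assert (B := Hgap' N m t Hm Ht).
    eapply Rle_lt_trans. apply Rabs_triang. rewrite Rabs_Ropp. lra. }
  set (b := fun t => real (Lim_seq (fun k => f k t))).
  assert (Hb : forall t, Rabs t < d -> forall k, Rabs (b t - f k t) <= 4 * M * (/2) ^ k).
  { intros t Ht k. assert (L := Lim_seq_correct' _ (Hcv t Ht)). fold (b t) in L.
    apply is_lim_seq_spec in L.
    apply Rle_trans with (4 * M * (/2) ^ k + 0); [|lra].
    apply Rminus_le. apply le_all_eps. intros eps He.
    destruct (L (mkposreal eps He)) as [N HN]. simpl in HN.
    specialize (HN (max N k) (Nat.le_max_l _ _)).
    assert (A := Hgap' k (max N k) t (Nat.le_max_r _ _) Ht).
    replace (b t - f k t) with (- (f (Init.Nat.max N k) t - b t) + (f (Init.Nat.max N k) t - f k t)) by ring.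
    assert (B := Rabs_triang (- (f (Init.Nat.max N k) t - b t)) (f (Init.Nat.max N k) t - f k t)).
    rewrite Rabs_Ropp in B. lra. }
  assert (Hbs : Sset d M b).
  { intros t Ht. split.
    - apply cont_ed. intros eps He.
      destruct (half_pow_small (4 * M) (eps / 3) ltac:(lra)) as [k Hk].
      destruct (ed_cont (f k) t (proj1 (Hf k t Ht)) (eps / 3) ltac:(lra)) as [del [Hdel Hy]].
      exists (Rmin del (d - Rabs t)). split. apply Rmin_pos; lra.
      intros y Hyt. assert (Hm1 := Rmin_l del (d - Rabs t)). assert (Hm2 := Rmin_r del (d - Rabs t)).
      assert (Hyd : Rabs y < d).
      { replace y with ((y - t) + t) by ring. eapply Rle_lt_trans. apply Rabs_triang. lra. }
      assert (A := Hb y Hyd k). assert (B := Hb t Ht k). assert (C := Hy y ltac:(lra)).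
      replace (b y - b t) with ((b y - f k y) + (f k y - f k t) - (b t - f k t)) by ring.
      eapply Rle_trans. apply Rabs_triang. rewrite Rabs_Ropp.
      eapply Rle_trans. apply Rplus_le_compat_r. apply Rabs_triang. lra.
    - apply Rminus_le. apply (le_half_pow _ (4 * M)). intros k.
      assert (A := Hb t Ht k). destruct (Hf k t Ht) as [_ B].
      replace (b t) with ((b t - f k t) + f k t) by ring.
      assert (C := Rabs_triang (b t - f k t) (f k t)). lra. }
  exists b. split; auto. intros t Ht.
  assert (Habs : Rabs (T b t - b t) <= 0).
  { apply (le_half_pow _ (4 * M)). intros k.
    assert (A := Hc b (f k) (4 * M * (/2) ^ k) Hbs (Hf k) (fun t' Ht' => Hb t' Ht' k) t Ht).
    assert (B := Hb t Ht (S k)). change (f (S k)) with (T (f k)) in B.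
    replace (T b t - b t) with ((T b t - T (f k) t) - (b t - T (f k) t)) by ring.
    eapply Rle_trans. apply Rabs_triang. rewrite Rabs_Ropp.
    assert (E: (/2)^(S k) = /2 * (/2)^k) by reflexivity. rewrite E in B. lra. }
  assert (Z := Rabs_pos (T b t - b t)).
  assert (Rabs (T b t - b t) = 0) by lra. apply Rabs_eq_0 in H. lra.
Qed.

Lemma fixed_unique (d M : R) (T : (R -> R) -> (R -> R)) (b1 b2 : R -> R) :
  Sset d M b1 -> Sset d M b2 ->
  (forall D, (forall t, Rabs t < d -> Rabs (b1 t - b2 t) <= D) ->
       forall t, Rabs t < d -> Rabs (T b1 t - T b2 t) <= D / 2) ->
  (forall t, Rabs t < d -> T b1 t = b1 t) -> (forall t, Rabs t < d -> T b2 t = b2 t) ->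
  forall t, Rabs t < d -> b1 t = b2 t.
Proof.
  intros H1 H2 Hc F1 F2.
  assert (Hk : forall k t, Rabs t < d -> Rabs (b1 t - b2 t) <= 2 * M * (/2) ^ k).
  { induction k; intros t Ht.
    - destruct (H1 t Ht) as [_ A]; destruct (H2 t Ht) as [_ B]. simpl.
      eapply Rle_trans. apply Rabs_triang. rewrite Rabs_Ropp. lra.
    - rewrite <- (F1 t Ht), <- (F2 t Ht). replace (2 * M * (/2) ^ S k) with (2 * M * (/2) ^ k / 2) by (simpl; field).
      apply Hc; auto. }
  intros t Ht. assert (A : Rabs (b1 t - b2 t) <= 0) by (apply (le_half_pow _ (2 * M)); intros; apply Hk; auto).
  assert (B := Rabs_pos (b1 t - b2 t)). assert (Rabs (b1 t - b2 t) = 0) by lra. apply Rabs_eq_0 in H. lra.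
Qed.

Lemma mvt_bound (f df : R -> R) a b B :
  (forall x, is_derive f x (df x)) -> (forall x, continuity_pt f x) ->
  (forall c, Rmin a b <= c <= Rmax a b -> Rabs (df c) <= B) ->
  Rabs (f a - f b) <= B * Rabs (a - b).
Proof.
  intros Hd Hc Hb. destruct (MVT_gen f b a df) as [c [Hc1 Hc2]].
  intros; apply Hd. intros; apply Hc.
  rewrite Hc2, Rabs_mult.
  apply Rmult_le_compat_r. apply Rabs_pos. apply Hb.
  unfold Rmin, Rmax in *. destruct (Rle_dec a b), (Rle_dec b a); lra.
Qed.

Lemma lip_sin a b : Rabs (sin a - sin b) <= Rabs (a - b).
Proof.
  rewrite <- (Rmult_1_l (Rabs (a - b))). apply (mvt_bound sin cos).
  intros; auto_derive; auto; ring. intros; apply continuity_sin.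
  intros; apply Rabs_le; split; [apply (COS_bound c)| apply COS_bound].
Qed.
Lemma lip_cos a b : Rabs (cos a - cos b) <= Rabs (a - b).
Proof.
  rewrite <- (Rmult_1_l (Rabs (a - b))). apply (mvt_bound cos (fun x => - sin x)).
  intros; auto_derive; auto; ring. intros; apply continuity_cos.
  intros; rewrite Rabs_Ropp; apply Rabs_le; split; [apply (SIN_bound c)| apply SIN_bound].
Qed.
Lemma sin_le_abs z : Rabs (sin z) <= Rabs z.
Proof. assert (A := lip_sin z 0). rewrite sin_0, !Rminus_0_r in A. auto. Qed.
Lemma cos1_le z : Rabs (cos z - 1) <= Rabs z.
Proof. assert (A := lip_cos z 0). rewrite cos_0, !Rminus_0_r in A. auto. Qed.
Lemma g_lip a b B : Rabs a <= B -> Rabs b <= B ->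
  Rabs ((a - sin a) - (b - sin b)) <= B * Rabs (a - b).
Proof.
  intros Ha Hb. apply (mvt_bound (fun z => z - sin z) (fun z => 1 - cos z)).
  intros; auto_derive; auto; ring. intros; apply continuity_pt_minus. apply continuity_pt_id. apply continuity_sin.
  intros c Hc. rewrite <- Rabs_Ropp. replace (- (1 - cos c)) with (cos c - 1) by ring.
  eapply Rle_trans. apply cos1_le. unfold Rmin, Rmax in Hc.
  revert Ha Hb. destruct (Rle_dec a b); unfold Rabs; repeat destruct Rcase_abs; intros; lra.
Qed.

Definition near (x0 : pt) r (x : pt) := Rabs (fst x - fst x0) <= r /\ Rabs (snd x - snd x0) <= r.
Definition unitb (v : pt) := Rabs (fst v) <= 1 /\ Rabs (snd v) <= 1.
Definition goodK (K : list (R * nat)) (x0 : pt) m := forall p, In p K -> m <= Rabs (dot (perp (e (fst p))) x0).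
Definition sum_coef (K : list (R * nat)) := fold_right (fun p a => INR (snd p) + a) 0 K.

Lemma sum_coef_nonneg K : 0 <= sum_coef K.
Proof. induction K; simpl. lra. assert (A := pos_INR (snd a)). lra. Qed.

Lemma abs_lin2 a b c d r1 r2 : Rabs a <= 1 -> Rabs b <= 1 -> Rabs c <= r1 -> Rabs d <= r2 ->
  Rabs (a * c + b * d) <= r1 + r2.
Proof.
  intros. eapply Rle_trans. apply Rabs_triang. rewrite !Rabs_mult.
  assert (Rabs a * Rabs c <= 1 * r1) by (apply Rmult_le_compat; auto; apply Rabs_pos).
  assert (Rabs b * Rabs d <= 1 * r2) by (apply Rmult_le_compat; auto; apply Rabs_pos). lra.
Qed.

Lemma cos_b x : Rabs (cos x) <= 1.
Proof. apply Rabs_le; apply COS_bound. Qed.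
Lemma sin_b x : Rabs (sin x) <= 1.
Proof. apply Rabs_le; apply SIN_bound. Qed.

Lemma den_diff phi x1 x2 r : Rabs (fst x1 - fst x2) <= r -> Rabs (snd x1 - snd x2) <= r ->
  Rabs (dot (perp (e phi)) x1 - dot (perp (e phi)) x2) <= 2 * r.
Proof.
  intros. unfold dot, perp, e; simpl.
  replace (- sin phi * fst x1 + cos phi * snd x1 - (- sin phi * fst x2 + cos phi * snd x2))
    with ((- sin phi) * (fst x1 - fst x2) + cos phi * (snd x1 - snd x2)) by ring.
  replace (2 * r) with (r + r) by ring. apply abs_lin2; auto. rewrite Rabs_Ropp; apply sin_b. apply cos_b.
Qed.
Lemma num_diff phi v1 v2 r : Rabs (fst v1 - fst v2) <= r -> Rabs (snd v1 - snd v2) <= r ->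
  Rabs (dot (e phi) v1 - dot (e phi) v2) <= 2 * r.
Proof.
  intros. unfold dot, e; simpl.
  replace (cos phi * fst v1 + sin phi * snd v1 - (cos phi * fst v2 + sin phi * snd v2))
    with (cos phi * (fst v1 - fst v2) + sin phi * (snd v1 - snd v2)) by ring.
  replace (2 * r) with (r + r) by ring. apply abs_lin2; auto. apply cos_b. apply sin_b.
Qed.
Lemma num_b phi v : unitb v -> Rabs (dot (e phi) v) <= 2.
Proof.
  intros [H1 H2]. unfold dot, e; simpl. replace 2 with (1 + 1) by ring. apply abs_lin2; auto. apply cos_b. apply sin_b.
Qed.

Lemma den_lb phi x0 x m r : m <= Rabs (dot (perp (e phi)) x0) -> near x0 r x -> r <= m/4 ->
  m/2 <= Rabs (dot (perp (e phi)) x).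
Proof.
  intros Hm [H1 H2] Hr. assert (A := den_diff phi x x0 r H1 H2).
  assert (B := Rabs_triang_inv (dot (perp (e phi)) x0) (dot (perp (e phi)) x)).
  rewrite <- Rabs_Ropp, Ropp_minus_distr in A. lra.
Qed.

Lemma inv_le_2m q m : 0 < m -> m / 2 <= Rabs q -> / Rabs q <= 2 / m.
Proof.
  intros Hm Hq. replace (2 / m) with (/ (m / 2)) by (field; lra). apply Rinv_le_contravar; lra.
Qed.

Lemma quot_bound p q m : 0 < m -> Rabs p <= 2 -> m / 2 <= Rabs q -> Rabs (p / q) <= 4 / m.
Proof.
  intros Hm Hp Hq. unfold Rdiv. rewrite Rabs_mult, Rabs_inv.
  replace (4 * / m) with (2 * (2 / m)) by (field; lra).
  apply Rmult_le_compat; auto. apply Rabs_pos. left; apply Rinv_0_lt_compat; lra.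
  apply inv_le_2m; auto.
Qed.

Lemma quot_lip p1 p2 q1 q2 m dl : 0 < m -> Rabs p2 <= 2 -> m / 2 <= Rabs q1 -> m / 2 <= Rabs q2 ->
  Rabs (p1 - p2) <= 2 * dl -> Rabs (q1 - q2) <= 2 * dl ->
  Rabs (p1 / q1 - p2 / q2) <= (4 / m + 16 / (m * m)) * dl.
Proof.
  intros Hm Hp2 H1 H2 Hpd Hqd.
  assert (q1 <> 0). { intro Z; rewrite Z, Rabs_R0 in H1; lra. }
  assert (q2 <> 0). { intro Z; rewrite Z, Rabs_R0 in H2; lra. }
  replace (p1 / q1 - p2 / q2) with ((p1 - p2) * / q1 + p2 * (q2 - q1) * (/ q1 * / q2)) by (field; auto).
  eapply Rle_trans. apply Rabs_triang. rewrite !Rabs_mult, !Rabs_inv.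
  assert (I1 := inv_le_2m q1 m Hm H1). assert (I2 := inv_le_2m q2 m Hm H2).
  assert (Hdl : 0 <= dl) by (assert (Z := Rabs_pos (p1 - p2)); lra).
  assert (P1 : Rabs (p1 - p2) * / Rabs q1 <= (2 * dl) * (2 / m)).
  { apply Rmult_le_compat; auto. apply Rabs_pos. left; apply Rinv_0_lt_compat, Rabs_pos_lt; auto. }
  assert (P2 : Rabs p2 * Rabs (q2 - q1) * (/ Rabs q1 * / Rabs q2) <= 2 * (2 * dl) * ((2 / m) * (2 / m))).
  { apply Rmult_le_compat. apply Rmult_le_pos; apply Rabs_pos.
    apply Rmult_le_pos; left; apply Rinv_0_lt_compat, Rabs_pos_lt; auto.
    apply Rmult_le_compat; auto; try apply Rabs_pos. rewrite <- Rabs_Ropp, Ropp_minus_distr; auto.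
    apply Rmult_le_compat; auto; left; apply Rinv_0_lt_compat, Rabs_pos_lt; auto. }
  assert (E : (2 * dl) * (2 / m) + 2 * (2 * dl) * ((2 / m) * (2 / m)) = (4 / m + 16 / (m * m)) * dl) by (field; lra).
  lra.
Qed.

Lemma sum_bound K x0 m r x v : goodK K x0 m -> 0 < m -> near x0 r x -> r <= m / 4 -> unitb v ->
  Rabs (sing_sum K x v) <= sum_coef K * (4 / m).
Proof.
  intros HK Hm Hn Hr Hv. induction K as [|p K IH]; simpl. rewrite Rabs_R0; lra.
  assert (IH' : Rabs (sing_sum K x v) <= sum_coef K * (4 / m)) by (apply IH; intros q Hq; apply HK; right; auto).
  fold (sing_sum K x v).
  eapply Rle_trans. apply Rabs_triang.
  assert (Q : Rabs (dot (e (fst p)) v / dot (perp (e (fst p))) x) <= 4 / m).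
  { apply quot_bound; auto. apply num_b; auto. eapply den_lb; eauto. apply HK; left; auto. }
  unfold Rdiv in *. rewrite Rmult_assoc, Rabs_mult, (Rabs_right (INR _)) by (apply Rle_ge, pos_INR).
  assert (INR (snd p) * Rabs (dot (e (fst p)) v * / dot (perp (e (fst p))) x) <= INR (snd p) * (4 * / m)).
  { apply Rmult_le_compat_l; auto. apply pos_INR. }
  nra.
Qed.

Lemma sum_lip K x0 m r x1 x2 v1 v2 dl : goodK K x0 m -> 0 < m -> near x0 r x1 -> near x0 r x2 -> r <= m / 4 ->
  unitb v1 -> unitb v2 ->
  Rabs (fst x1 - fst x2) <= dl -> Rabs (snd x1 - snd x2) <= dl ->
  Rabs (fst v1 - fst v2) <= dl -> Rabs (snd v1 - snd v2) <= dl ->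
  Rabs (sing_sum K x1 v1 - sing_sum K x2 v2) <= sum_coef K * (4 / m + 16 / (m * m)) * dl.
Proof.
  intros HK Hm Hn1 Hn2 Hr Hv1 Hv2 Dx1 Dx2 Dv1 Dv2.
  assert (Hdl : 0 <= dl) by (assert (Z := Rabs_pos (fst x1 - fst x2)); lra).
  induction K as [|p K IH]; simpl. rewrite Rminus_0_r, Rabs_R0; lra.
  assert (IH' := IH (fun q Hq => HK q (or_intror Hq))).
  fold (sing_sum K x1 v1) (sing_sum K x2 v2) in *.
  assert (Q : Rabs (dot (e (fst p)) v1 / dot (perp (e (fst p))) x1 - dot (e (fst p)) v2 / dot (perp (e (fst p))) x2)
     <= (4 / m + 16 / (m * m)) * dl).
  { apply quot_lip; auto. apply num_b; auto. eapply den_lb; eauto. apply HK; left; auto.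
    eapply den_lb; eauto. apply HK; left; auto. apply num_diff; auto. apply den_diff; auto. }
  set (A := dot (e (fst p)) v1 / dot (perp (e (fst p))) x1) in *.
  set (B := dot (e (fst p)) v2 / dot (perp (e (fst p))) x2) in *.
  replace (INR (snd p) * dot (e (fst p)) v1 / dot (perp (e (fst p))) x1 + sing_sum K x1 v1 -
           (INR (snd p) * dot (e (fst p)) v2 / dot (perp (e (fst p))) x2 + sing_sum K x2 v2))
    with (INR (snd p) * (A - B) + (sing_sum K x1 v1 - sing_sum K x2 v2)) by (unfold A, B, Rdiv; ring).
  eapply Rle_trans. apply Rabs_triang. rewrite Rabs_mult, (Rabs_right (INR _)) by (apply Rle_ge, pos_INR).
  assert (INR (snd p) * Rabs (A - B) <= INR (snd p) * ((4 / m + 16 / (m * m)) * dl)).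
  { apply Rmult_le_compat_l; auto. apply pos_INR. }
  nra.
Qed.

Lemma sum_cont K (X V : R -> pt) s :
  continuous (fun t => fst (X t)) s -> continuous (fun t => snd (X t)) s ->
  continuous (fun t => fst (V t)) s -> continuous (fun t => snd (V t)) s ->
  (forall p, In p K -> dot (perp (e (fst p))) (X s) <> 0) ->
  continuous (fun t => sing_sum K (X t) (V t)) s.
Proof.
  intros C1 C2 C3 C4 HK. induction K as [|p K IH]; simpl. apply c_const.
  apply c_plus. 2:{ apply IH. intros; apply HK; right; auto. }
  apply c_div. apply c_mult. apply c_const.
  unfold dot; simpl. apply c_plus; apply c_mult; auto; apply c_const.
  unfold dot; simpl. apply c_plus; apply c_mult; auto; apply c_const.
  apply HK; left; auto.
Qed.

Lemma RInt_diff_bound (f g : R -> R) s B : (forall t, Rabs t <= Rabs s -> continuous f t) ->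
  (forall t, Rabs t <= Rabs s -> continuous g t) ->
  (forall t, Rabs t <= Rabs s -> Rabs (f t - g t) <= B) -> Rabs (RInt f 0 s - RInt g 0 s) <= Rabs s * B.
Proof.
  intros Hf Hg Hb.
  - assert (E : RInt (fun t => minus (f t) (g t)) 0 s = RInt f 0 s - RInt g 0 s).
    { rewrite (@RInt_minus R_CompleteNormedModule). reflexivity. apply ex_RInt_sym; auto. apply ex_RInt_sym; auto. }
    rewrite <- E. apply RInt_abs_bound. intros; apply c_minus; auto. exact Hb.
Qed.

Lemma addK (a b : R) : a + b - a = b.
Proof. ring. Qed.
Lemma addK2 (a b c : R) : a + b - (a + c) = b - c.
Proof. ring. Qed.

Section Op.
Variables (phi : R) (x0 : pt) (N : nat) (K : list (R * nat)) (c1 : R) (H : R -> R).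

Definition psi (b : R -> R) t := t * b t.
Definition th (b : R -> R) t := phi + PI / 2 + psi b t.
Definition X (b : R -> R) s : pt :=
  (fst x0 + RInt (fun t => cos (th b t)) 0 s, snd x0 + RInt (fun t => sin (th b t)) 0 s).
Definition Aop (b : R -> R) := W 0 (fun t => cos (psi b t)).
Definition Sn (b : R -> R) s := if Req_EM_T s 0 then b 0 else sin (psi b s) / s.
Definition Gop (b : R -> R) s := sing_sum K (X b s) (e (th b s)) - c1 * H s.
Definition rho (b : R -> R) s := INR N * (b s - Sn b s / Aop b s) + Gop b s.
Definition Phi (b : R -> R) := W N (rho b).

Lemma psi_cont b t : continuous b t -> continuous (psi b) t.
Proof. intros; apply c_mult; auto; apply c_id. Qed.
Lemma th_cont b t : continuous b t -> continuous (th b) t.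
Proof. intros; unfold th. apply c_plus. apply c_const. now apply psi_cont. Qed.

Lemma Sset_le d M b t : Sset d M b -> Rabs t < d -> Rabs (psi b t) <= Rabs t * M.
Proof. intros Hb Ht. unfold psi. rewrite Rabs_mult. apply Rmult_le_compat_l. apply Rabs_pos. apply Hb; auto. Qed.

Lemma psi_diff b1 b2 t D : Rabs (b1 t - b2 t) <= D -> Rabs (psi b1 t - psi b2 t) <= Rabs t * D.
Proof.
  intros. unfold psi. replace (t * b1 t - t * b2 t) with (t * (b1 t - b2 t)) by ring.
  rewrite Rabs_mult. apply Rmult_le_compat_l; auto. apply Rabs_pos.
Qed.

Lemma X_near d M b s : Sset d M b -> Rabs s < d -> near x0 (Rabs s) (X b s).
Proof.
  intros Hb Hs. unfold near, X; simpl. split.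
  - rewrite addK.
    rewrite <- (Rmult_1_r (Rabs s)). apply RInt_abs_bound.
    intros; apply c_cos, th_cont, Hb; lra. intros; apply cos_b.
  - rewrite addK.
    rewrite <- (Rmult_1_r (Rabs s)). apply RInt_abs_bound.
    intros; apply c_sin, th_cont, Hb; lra. intros; apply sin_b.
Qed.

Lemma th_diff d b1 b2 t D : Rabs t < d -> Rabs (b1 t - b2 t) <= D -> Rabs (th b1 t - th b2 t) <= d * D.
Proof.
  intros Ht HD. unfold th. replace (phi + PI / 2 + psi b1 t - (phi + PI / 2 + psi b2 t)) with (psi b1 t - psi b2 t) by ring.
  eapply Rle_trans. apply psi_diff; eauto. apply Rmult_le_compat_r. eapply Rle_trans; [apply Rabs_pos|apply HD]. lra.
Qed.

Lemma X_lip d M b1 b2 D s : Sset d M b1 -> Sset d M b2 -> (forall t, Rabs t < d -> Rabs (b1 t - b2 t) <= D) ->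
  Rabs s < d -> Rabs (fst (X b1 s) - fst (X b2 s)) <= Rabs s * (d * D) /\
                Rabs (snd (X b1 s) - snd (X b2 s)) <= Rabs s * (d * D).
Proof.
  intros H1 H2 HD Hs. unfold X; simpl. split.
  - rewrite addK2.
    apply RInt_diff_bound. intros; apply c_cos, th_cont, H1; lra. intros; apply c_cos, th_cont, H2; lra.
    intros t Ht. eapply Rle_trans. apply lip_cos. apply th_diff; [lra| apply HD; lra].
  - rewrite addK2.
    apply RInt_diff_bound. intros; apply c_sin, th_cont, H1; lra. intros; apply c_sin, th_cont, H2; lra.
    intros t Ht. eapply Rle_trans. apply lip_sin. apply th_diff; [lra| apply HD; lra].
Qed.

Lemma INR1 : INR 1 = 1.
Proof. reflexivity. Qed.

Lemma Sset_M d M b s : Sset d M b -> Rabs s < d -> 0 <= M.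
Proof. intros Hb Hs. assert (A := proj2 (Hb s Hs)). eapply Rle_trans; [apply Rabs_pos|apply A]. Qed.

Lemma W0_bound (f : R -> R) s c D : (forall t, Rabs t <= Rabs s -> continuous f t) ->
  (forall t, Rabs t <= Rabs s -> Rabs (f t - c) <= D) -> Rabs (W 0 f s - c) <= D.
Proof. intros A B. assert (Z := W_bound f 0 s c D A B). replace (c / INR 1) with c in Z by (simpl; field). exact Z. Qed.

Lemma A_near d M b s : Sset d M b -> Rabs s < d -> Rabs (Aop b s - 1) <= Rabs s * M.
Proof.
  intros Hb Hs. unfold Aop. apply W0_bound. intros; apply c_cos, psi_cont, Hb; lra.
  intros t Ht. eapply Rle_trans. apply cos1_le. eapply Rle_trans. apply (Sset_le d M); auto; lra.
  apply Rmult_le_compat_r; auto. eapply Sset_M; eauto.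
Qed.

Lemma A_lip d M b1 b2 D s : Sset d M b1 -> Sset d M b2 -> (forall t, Rabs t < d -> Rabs (b1 t - b2 t) <= D) ->
  Rabs s < d -> Rabs (Aop b1 s - Aop b2 s) <= Rabs s * D.
Proof.
  intros H1 H2 HD Hs. unfold Aop. rewrite W_minus.
  2:{ intros; apply c_cos, psi_cont, H1; lra. } 2:{ intros; apply c_cos, psi_cont, H2; lra. }
  rewrite <- (Rminus_0_r (W 0 _ s)). apply W0_bound. intros; apply c_minus; apply c_cos, psi_cont; [apply H1|apply H2]; lra.
  intros t Ht. rewrite Rminus_0_r. eapply Rle_trans. apply lip_cos. eapply Rle_trans. apply psi_diff. apply HD; lra.
  apply Rmult_le_compat_r; auto. assert (A := HD s Hs).
  eapply Rle_trans; [apply Rabs_pos|apply A].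
Qed.

Lemma div_abs_le (a s B : R) : s <> 0 -> Rabs a <= Rabs s * B -> Rabs (a / s) <= B.
Proof.
  intros Hs Ha. assert (0 < Rabs s) by (apply Rabs_pos_lt; auto).
  unfold Rdiv. rewrite Rabs_mult, Rabs_inv.
  apply (Rmult_le_reg_l (Rabs s)); auto. replace (Rabs s * (Rabs a * / Rabs s)) with (Rabs a) by (field; lra). auto.
Qed.

Lemma Sn_bound M b s : Rabs (b s) <= M -> Rabs (b 0) <= M -> Rabs (Sn b s) <= M.
Proof.
  intros Hs H0. unfold Sn. destruct (Req_EM_T s 0) as [->|Hne]; auto.
  apply div_abs_le; auto. eapply Rle_trans. apply sin_le_abs. unfold psi. rewrite Rabs_mult.
  apply Rmult_le_compat_l; auto. apply Rabs_pos.
Qed.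

Lemma Sn_lip b1 b2 s D : Rabs (b1 s - b2 s) <= D -> Rabs (b1 0 - b2 0) <= D -> Rabs (Sn b1 s - Sn b2 s) <= D.
Proof.
  intros Hs H0. unfold Sn. destruct (Req_EM_T s 0) as [->|Hne]; auto.
  replace (sin (psi b1 s) / s - sin (psi b2 s) / s) with ((sin (psi b1 s) - sin (psi b2 s)) / s) by (field; auto).
  apply div_abs_le; auto. eapply Rle_trans. apply lip_sin. apply psi_diff; auto.
Qed.

Lemma u_lip M b1 b2 s D : Rabs (b1 s) <= M -> Rabs (b2 s) <= M -> Rabs (b1 s - b2 s) <= D -> 0 <= M -> 0 <= D ->
  Rabs ((b1 s - Sn b1 s) - (b2 s - Sn b2 s)) <= Rabs s * M * D.
Proof.
  intros H1 H2 HD HM HD0. unfold Sn. destruct (Req_EM_T s 0) as [->|Hne].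
  - rewrite Rabs_R0. replace (b1 0 - b1 0 - (b2 0 - b2 0)) with 0 by ring. rewrite Rabs_R0. lra.
  - replace (b1 s - sin (psi b1 s) / s - (b2 s - sin (psi b2 s) / s))
      with (((psi b1 s - sin (psi b1 s)) - (psi b2 s - sin (psi b2 s))) / s) by (unfold psi; field; auto).
    apply div_abs_le; auto. eapply Rle_trans. apply (g_lip _ _ (Rabs s * M)).
    unfold psi; rewrite Rabs_mult; apply Rmult_le_compat_l; auto; apply Rabs_pos.
    unfold psi; rewrite Rabs_mult; apply Rmult_le_compat_l; auto; apply Rabs_pos.
    replace (Rabs s * (Rabs s * M * D)) with ((Rabs s * M) * (Rabs s * D)) by ring.
    apply Rmult_le_compat_l. apply Rmult_le_pos; auto; apply Rabs_pos.
    apply psi_diff; auto.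
Qed.

Lemma inv_le2 A : 1/2 <= A -> / A <= 2.
Proof. intros. replace 2 with (/ (1/2)) by field. apply Rinv_le_contravar; lra. Qed.

Lemma Y_alg b1 S1 A1 b2 S2 A2 e1 e2 D M :
  Rabs (A1 - 1) <= e1 -> Rabs (A2 - 1) <= e1 -> e1 <= 1/2 -> Rabs (A1 - A2) <= e2 ->
  Rabs S1 <= M -> Rabs (S1 - S2) <= D -> Rabs ((b1 - S1) - (b2 - S2)) <= M * e2 ->
  0 <= M -> 0 <= D -> e2 <= D ->
  Rabs ((b1 - S1 / A1) - (b2 - S2 / A2)) <= M * e2 + 2 * e1 * D + 4 * M * e2.
Proof.
  intros HA1 HA2 He1 HA12 HS1 HS12 Hu HM HD He2.
  assert (P1 : 1/2 <= A1) by (apply Rabs_le_between in HA1; lra).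
  assert (P2 : 1/2 <= A2) by (apply Rabs_le_between in HA2; lra).
  set (h1 := (A1 - 1) / A1). set (h2 := (A2 - 1) / A2).
  replace ((b1 - S1 / A1) - (b2 - S2 / A2)) with (((b1 - S1) - (b2 - S2)) + (S1 - S2) * h2 + S1 * (h1 - h2))
    by (unfold h1, h2; field; lra).
  assert (Hh2 : Rabs h2 <= 2 * e1).
  { unfold h2. unfold Rdiv. rewrite Rabs_mult, Rabs_inv, (Rabs_right A2) by lra.
    apply Rle_trans with (e1 * 2). apply Rmult_le_compat; auto. apply Rabs_pos. left; apply Rinv_0_lt_compat; lra.
    apply inv_le2; lra. lra. }
  assert (Hh12 : Rabs (h1 - h2) <= 4 * e2).
  { unfold h1, h2. replace ((A1 - 1) / A1 - (A2 - 1) / A2) with ((A1 - A2) * (/ A1 * / A2)) by (field; lra).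
    rewrite Rabs_mult, Rabs_mult, !Rabs_inv, (Rabs_right A1), (Rabs_right A2) by lra.
    replace (4 * e2) with (e2 * (2 * 2)) by ring.
    apply Rmult_le_compat; auto. apply Rabs_pos. apply Rmult_le_pos; left; apply Rinv_0_lt_compat; lra.
    apply Rmult_le_compat; try (left; apply Rinv_0_lt_compat; lra); apply inv_le2; lra. }
  eapply Rle_trans. apply Rabs_triang. eapply Rle_trans. apply Rplus_le_compat_r. apply Rabs_triang.
  rewrite !Rabs_mult.
  assert (Rabs (S1 - S2) * Rabs h2 <= D * (2 * e1)) by (apply Rmult_le_compat; auto; apply Rabs_pos).
  assert (Rabs S1 * Rabs (h1 - h2) <= M * (4 * e2)) by (apply Rmult_le_compat; auto; apply Rabs_pos).
  nra.
Qed.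

Definition Yf (b : R -> R) s := b s - Sn b s / Aop b s.

Lemma Y_lip d M b1 b2 D s : Sset d M b1 -> Sset d M b2 -> (forall t, Rabs t < d -> Rabs (b1 t - b2 t) <= D) ->
  Rabs s < d -> d <= 1 -> M * d <= 1/2 ->
  Rabs (Yf b1 s - Yf b2 s) <= 7 * M * d * D.
Proof.
  intros H1 H2 HD Hs Hd1 HMd. unfold Yf.
  assert (HM := Sset_M d M b1 s H1 Hs). assert (HD0 : 0 <= D) by (eapply Rle_trans; [apply Rabs_pos|apply (HD s Hs)]).
  assert (Hd0 : 0 < d) by (assert (Z := Rabs_pos s); lra).
  assert (Has := Rabs_pos s).
  assert (E : M * (d * D) + 2 * (M * d) * D + 4 * M * (d * D) = 7 * M * d * D) by ring.
  rewrite <- E. apply Y_alg.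
  - eapply Rle_trans. apply (A_near d M); auto. rewrite Rmult_comm. apply Rmult_le_compat_l; lra.
  - eapply Rle_trans. apply (A_near d M); auto. rewrite Rmult_comm. apply Rmult_le_compat_l; lra.
  - lra.
  - eapply Rle_trans. apply (A_lip d M); eauto. apply Rmult_le_compat_r; lra.
  - apply Sn_bound; apply H1; auto. rewrite Rabs_R0; lra.
  - apply Sn_lip; apply HD; auto. rewrite Rabs_R0; lra.
  - eapply Rle_trans. apply (u_lip M); auto. apply H1; auto. apply H2; auto.
    replace (M * (d * D)) with (d * M * D) by ring. apply Rmult_le_compat_r; auto. apply Rmult_le_compat_r; lra.
  - auto.
  - auto.
  - replace D with (1 * D) at 2 by ring. apply Rmult_le_compat_r; lra.
Qed.

Lemma Sset_zero d M : 0 <= M -> Sset d M (fun _ => 0).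
Proof. intros HM t Ht. split. apply c_const. rewrite Rabs_R0; auto. Qed.

Lemma Yf_zero s : Yf (fun _ => 0) s = 0.
Proof.
  unfold Yf, Sn. destruct (Req_EM_T s 0). unfold Rdiv; ring.
  unfold psi. rewrite Rmult_0_r, sin_0. unfold Rdiv; ring.
Qed.

Lemma Y_bound d M b s : Sset d M b -> Rabs s < d -> d <= 1 -> M * d <= 1/2 ->
  Rabs (Yf b s) <= 7 * M * d * M.
Proof.
  intros Hb Hs Hd1 HMd. assert (HM := Sset_M d M b s Hb Hs).
  rewrite <- (Rminus_0_r (Yf b s)). rewrite <- (Yf_zero s).
  apply (Y_lip d); auto. apply Sset_zero; auto. intros t Ht. rewrite Rminus_0_r. apply Hb; auto.
Qed.

Definition Lg m := sum_coef K * (4 / m + 16 / (m * m)).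

Lemma near_mono r1 r2 x : near x0 r1 x -> r1 <= r2 -> near x0 r2 x.
Proof. intros [A B] Hr. split; lra. Qed.

Lemma unitb_e a : unitb (e a).
Proof. split; simpl. apply cos_b. apply sin_b. Qed.

Lemma G_lip m d M b1 b2 D s : 0 < m -> goodK K x0 m -> d <= m / 4 -> d <= 1 ->
  Sset d M b1 -> Sset d M b2 -> (forall t, Rabs t < d -> Rabs (b1 t - b2 t) <= D) -> Rabs s < d ->
  Rabs (Gop b1 s - Gop b2 s) <= Lg m * (d * D).
Proof.
  intros Hm HK Hdm Hd1 H1 H2 HD Hs. unfold Gop.
  replace (sing_sum K (X b1 s) (e (th b1 s)) - c1 * H s - (sing_sum K (X b2 s) (e (th b2 s)) - c1 * H s))
    with (sing_sum K (X b1 s) (e (th b1 s)) - sing_sum K (X b2 s) (e (th b2 s))) by ring.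
  assert (HD0 : 0 <= D) by (eapply Rle_trans; [apply Rabs_pos|apply (HD s Hs)]).
  assert (Hd0 : 0 < d) by (assert (Z := Rabs_pos s); lra).
  destruct (X_lip d M b1 b2 D s H1 H2 HD Hs) as [L1 L2].
  assert (Hsd : Rabs s * (d * D) <= d * D).
  { replace (d * D) with (1 * (d * D)) at 2 by ring. apply Rmult_le_compat_r. apply Rmult_le_pos; lra. lra. }
  unfold Lg. apply (sum_lip K x0 m d); auto.
  - eapply near_mono. apply (X_near d M); auto. lra.
  - eapply near_mono. apply (X_near d M); auto. lra.
  - apply unitb_e. - apply unitb_e.
  - lra. - lra.
  - simpl. eapply Rle_trans. apply lip_cos. apply th_diff; auto.
  - simpl. eapply Rle_trans. apply lip_sin. apply th_diff; auto.
Qed.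

Lemma G_bound m d M Hm b s : 0 < m -> goodK K x0 m -> d <= m / 4 -> d <= 1 ->
  (forall t, Rabs t <= 1 -> Rabs (H t) <= Hm) ->
  Sset d M b -> Rabs s < d -> Rabs (Gop b s) <= sum_coef K * (4 / m) + Rabs c1 * Hm.
Proof.
  intros Hm0 HK Hdm Hd1 HH Hb Hs. unfold Gop.
  eapply Rle_trans. apply Rabs_triang. rewrite Rabs_Ropp, Rabs_mult.
  apply Rplus_le_compat. apply (sum_bound K x0 m d); auto.
  eapply near_mono. apply (X_near d M); auto. lra. apply unitb_e.
  apply Rmult_le_compat_l. apply Rabs_pos. apply HH; lra.
Qed.

Lemma X_cont d M b s : Sset d M b -> Rabs s < d ->
  continuous (fun t => fst (X b t)) s /\ continuous (fun t => snd (X b t)) s.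
Proof.
  intros Hb Hs. unfold X; simpl. split; apply c_plus; try apply c_const.
  apply (RInt_cont _ d); auto. intros; apply c_cos, th_cont, Hb; auto.
  apply (RInt_cont _ d); auto. intros; apply c_sin, th_cont, Hb; auto.
Qed.

Lemma den_nz m d M b s p : 0 < m -> goodK K x0 m -> d <= m / 4 -> Sset d M b -> Rabs s < d -> In p K ->
  m / 2 <= Rabs (dot (perp (e (fst p))) (X b s)).
Proof.
  intros Hm HK Hdm Hb Hs Hp. eapply den_lb. apply HK; auto. eapply near_mono. apply (X_near d M); eauto. apply Rle_refl.
  lra.
Qed.

Lemma G_cont m d M b s : 0 < m -> goodK K x0 m -> d <= m / 4 -> (forall t, continuous H t) ->
  Sset d M b -> Rabs s < d -> continuous (Gop b) s.
Proof.
  intros Hm HK Hdm HHc Hb Hs. unfold Gop. apply c_minus.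
  2:{ apply c_mult. apply c_const. apply HHc. }
  destruct (X_cont d M b s Hb Hs).
  apply (sum_cont K (X b) (fun t => e (th b t))); auto.
  simpl; apply c_cos, th_cont, Hb; auto. simpl; apply c_sin, th_cont, Hb; auto.
  intros p Hp Z. assert (A := den_nz m d M b s p Hm HK Hdm Hb Hs Hp). rewrite Z, Rabs_R0 in A. lra.
Qed.

Lemma Sn_cont d M b s : Sset d M b -> Rabs s < d -> continuous (Sn b) s.
Proof.
  intros Hb Hs. destruct (Req_dec s 0) as [->|Hs0].
  - apply cont_ed. intros eps He.
    assert (HM := Sset_M d M b 0 Hb Hs).
    destruct (ed_cont b 0 (proj1 (Hb 0 Hs)) (eps / 2) ltac:(lra)) as [del [Hdel Hy]].
    set (r := Rmin (Rmin del d) (eps / (2 * (M * M + 1)))).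
    assert (Hr1 : r <= del) by (unfold r; eapply Rle_trans; apply Rmin_l).
    assert (Hr2 : r <= d) by (unfold r; eapply Rle_trans; [apply Rmin_l| apply Rmin_r]).
    assert (Hr3 : r <= eps / (2 * (M * M + 1))) by (unfold r; apply Rmin_r).
    assert (Hd0 : 0 < d) by (rewrite Rabs_R0 in Hs; lra).
    assert (HMM : 0 < M * M + 1) by nra.
    exists r. split. unfold r; repeat apply Rmin_pos; auto. apply Rdiv_lt_0_compat; lra.
    intros y Hyr. rewrite Rminus_0_r in Hyr.
    assert (Hyd : Rabs y < d) by lra.
    assert (U := u_lip M b (fun _ => 0) y M (proj2 (Hb y Hyd)) ltac:(cbv beta; rewrite Rabs_R0; lra)
                  ltac:(cbv beta; rewrite Rminus_0_r; apply Hb; auto) HM HM).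
    assert (Z : Sn (fun _ : R => 0) y = 0).
    { unfold Sn. destruct (Req_EM_T y 0); auto. unfold psi. rewrite Rmult_0_r, sin_0. unfold Rdiv; ring. }
    rewrite Z in U. replace (b y - Sn b y - (0 - 0)) with (b y - Sn b y) in U by ring.
    assert (S0 : Sn b 0 = b 0) by (unfold Sn; destruct (Req_EM_T 0 0); congruence).
    rewrite S0.
    assert (B := Hy y ltac:(rewrite Rminus_0_r; lra)).
    replace (Sn b y - b 0) with (- (b y - Sn b y) + (b y - b 0)) by ring.
    eapply Rle_trans. apply Rabs_triang. rewrite Rabs_Ropp.
    assert (Rabs y * M * M <= eps / 2).
    { apply Rle_trans with (eps / (2 * (M * M + 1)) * (M * M + 1)).
      rewrite Rmult_assoc. apply Rmult_le_compat; try nra. apply Rabs_pos. 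
      right; field; lra. }
    lra.
  - apply (continuous_ext_loc _ (fun y => sin (psi b y) / y)).
    + apply (loc_of s (Rabs s)). apply Rabs_pos_lt; auto.
      intros y Hy. unfold Sn. destruct (Req_EM_T y 0) as [->|]; auto.
      rewrite Rminus_0_l, Rabs_Ropp in Hy. lra.
    + apply c_div; auto. apply c_sin, psi_cont, Hb; auto. apply c_id.
Qed.

Lemma A_cont d M b s : Sset d M b -> Rabs s < d -> continuous (Aop b) s.
Proof. intros Hb Hs. unfold Aop. apply (W_cont _ 0 d); auto. intros; apply c_cos, psi_cont, Hb; auto. Qed.

Lemma A_pos d M b s : Sset d M b -> Rabs s < d -> M * d <= 1/2 -> 1/2 <= Aop b s.
Proof.
  intros Hb Hs HMd. assert (A := A_near d M b s Hb Hs). assert (HM := Sset_M d M b s Hb Hs).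
  assert (Rabs s * M <= d * M) by (apply Rmult_le_compat_r; auto; lra).
  apply Rabs_le_between in A. lra.
Qed.

Lemma rho_cont m d M b s : 0 < m -> goodK K x0 m -> d <= m / 4 -> M * d <= 1/2 -> (forall t, continuous H t) ->
  Sset d M b -> Rabs s < d -> continuous (rho b) s.
Proof.
  intros Hm HK Hdm HMd HHc Hb Hs. unfold rho. apply c_plus.
  - apply c_mult. apply c_const. apply c_minus. apply Hb; auto. apply c_div.
    apply (Sn_cont d M); auto. apply (A_cont d M); auto.
    assert (A := A_pos d M b s Hb Hs HMd). lra.
  - apply (G_cont m d M); auto.
Qed.

Lemma rho_lip m d M b1 b2 D s : 0 < m -> goodK K x0 m -> d <= m / 4 -> d <= 1 -> M * d <= 1/2 ->
  Sset d M b1 -> Sset d M b2 -> (forall t, Rabs t < d -> Rabs (b1 t - b2 t) <= D) -> Rabs s < d ->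
  Rabs (rho b1 s - rho b2 s) <= (INR N * 7 * M + Lg m) * d * D.
Proof.
  intros Hm HK Hdm Hd1 HMd H1 H2 HD Hs. unfold rho.
  replace (INR N * (b1 s - Sn b1 s / Aop b1 s) + Gop b1 s - (INR N * (b2 s - Sn b2 s / Aop b2 s) + Gop b2 s))
    with (INR N * (Yf b1 s - Yf b2 s) + (Gop b1 s - Gop b2 s)) by (unfold Yf; ring).
  eapply Rle_trans. apply Rabs_triang. rewrite Rabs_mult, (Rabs_right (INR N)) by (apply Rle_ge, pos_INR).
  assert (A := Y_lip d M b1 b2 D s H1 H2 HD Hs Hd1 HMd).
  assert (B := G_lip m d M b1 b2 D s Hm HK Hdm Hd1 H1 H2 HD Hs).
  assert (INR N * Rabs (Yf b1 s - Yf b2 s) <= INR N * (7 * M * d * D)) by (apply Rmult_le_compat_l; auto; apply pos_INR).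
  nra.
Qed.

Lemma rho_bound m d M Hm b s : 0 < m -> goodK K x0 m -> d <= m / 4 -> d <= 1 -> M * d <= 1/2 ->
  (forall t, Rabs t <= 1 -> Rabs (H t) <= Hm) ->
  Sset d M b -> Rabs s < d ->
  Rabs (rho b s) <= INR N * 7 * M * d * M + (sum_coef K * (4 / m) + Rabs c1 * Hm).
Proof.
  intros Hm0 HK Hdm Hd1 HMd HH Hb Hs. unfold rho. fold (Yf b s).
  eapply Rle_trans. apply Rabs_triang. rewrite Rabs_mult, (Rabs_right (INR N)) by (apply Rle_ge, pos_INR).
  assert (A := Y_bound d M b s Hb Hs Hd1 HMd).
  assert (B := G_bound m d M Hm b s Hm0 HK Hdm Hd1 HH Hb Hs).
  assert (INR N * Rabs (Yf b s) <= INR N * (7 * M * d * M)) by (apply Rmult_le_compat_l; auto; apply pos_INR).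
  nra.
Qed.

Lemma Phi_cont m d M b s : 0 < m -> goodK K x0 m -> d <= m / 4 -> M * d <= 1/2 -> (forall t, continuous H t) ->
  Sset d M b -> Rabs s < d -> continuous (Phi b) s.
Proof. intros. unfold Phi. apply (W_cont _ N d); auto. intros; apply (rho_cont m d M); auto. Qed.

Lemma Phi_lip m d M b1 b2 D s : 0 < m -> goodK K x0 m -> d <= m / 4 -> d <= 1 -> M * d <= 1/2 ->
  (forall t, continuous H t) ->
  Sset d M b1 -> Sset d M b2 -> (forall t, Rabs t < d -> Rabs (b1 t - b2 t) <= D) -> Rabs s < d ->
  Rabs (Phi b1 s - Phi b2 s) <= (INR N * 7 * M + Lg m) * d * D.
Proof.
  intros Hm HK Hdm Hd1 HMd HHc H1 H2 HD Hs. unfold Phi. rewrite W_minus.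
  2:{ intros; apply (rho_cont m d M); auto; lra. } 2:{ intros; apply (rho_cont m d M); auto; lra. }
  replace (W N (fun t => rho b1 t - rho b2 t) s) with (W N (fun t => rho b1 t - rho b2 t) s - 0 / INR (S N))
    by (unfold Rdiv; ring).
  apply W_bound. intros; apply c_minus; apply (rho_cont m d M); auto; lra.
  intros t Ht. rewrite Rminus_0_r. apply (rho_lip m d M); auto. lra.
Qed.

Lemma Phi_bound m d M Hm b s : 0 < m -> goodK K x0 m -> d <= m / 4 -> d <= 1 -> M * d <= 1/2 ->
  (forall t, continuous H t) -> (forall t, Rabs t <= 1 -> Rabs (H t) <= Hm) ->
  Sset d M b -> Rabs s < d ->
  Rabs (Phi b s) <= INR N * 7 * M * d * M + (sum_coef K * (4 / m) + Rabs c1 * Hm).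
Proof.
  intros Hm0 HK Hdm Hd1 HMd HHc HH Hb Hs. unfold Phi.
  replace (W N (rho b) s) with (W N (rho b) s - 0 / INR (S N)) by (unfold Rdiv; ring).
  apply W_bound. intros; apply (rho_cont m d M); auto; lra.
  intros t Ht. rewrite Rminus_0_r. apply (rho_bound m d M); auto. lra.
Qed.

End Op.

Lemma der_eq (f : R -> R) (x l l' : R) : is_derive f x l -> l = l' -> is_derive f x l'.
Proof. intros; subst; auto. Qed.
Lemma der_comp (f g : R -> R) x df dg : is_derive f (g x) df -> is_derive g x dg ->
  is_derive (fun t => f (g t)) x (dg * df).
Proof. intros. apply (is_derive_comp f g x df dg); auto. Qed.
Lemma der_mult (f g : R -> R) x df dg : is_derive f x df -> is_derive g x dg ->
  is_derive (fun t => f t * g t) x (df * g x + f x * dg).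
Proof. intros. apply (is_derive_mult f g x df dg); auto. intros; apply Rmult_comm. Qed.
Lemma der_plus (f g : R -> R) x df dg : is_derive f x df -> is_derive g x dg ->
  is_derive (fun t => f t + g t) x (df + dg).
Proof. intros. apply (is_derive_plus f g x df dg); auto. Qed.
Lemma der_const (c x : R) : is_derive (fun _ => c) x 0.
Proof. apply (is_derive_const c x). Qed.
Lemma der_id (x : R) : is_derive (fun t => t) x 1.
Proof. apply (is_derive_id x). Qed.
Lemma der_cos (g : R -> R) x dg : is_derive g x dg -> is_derive (fun t => cos (g t)) x (- sin (g x) * dg).
Proof. intros. eapply der_eq. apply (der_comp cos g x (- sin (g x)) dg); auto. auto_derive; auto. apply Rmult_1_l. apply Rmult_comm. Qed.
Lemma der_sin (g : R -> R) x dg : is_derive g x dg -> is_derive (fun t => sin (g t)) x (cos (g x) * dg).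
Proof. intros. eapply der_eq. apply (der_comp sin g x (cos (g x)) dg); auto. auto_derive; auto. apply Rmult_1_l. apply Rmult_comm. Qed.
Lemma der_pow k x : is_derive (fun t => t ^ k) x (INR k * x ^ pred k).
Proof. eapply der_eq. apply (is_derive_pow (fun t => t) k x 1). apply der_id. simpl. rewrite Rmult_1_r. reflexivity. Qed.

Lemma der_RInt (g : R -> R) d s : (forall t, Rabs t < d -> continuous g t) -> Rabs s < d ->
  is_derive (fun y => RInt g 0 y) s (g s).
Proof.
  intros Hc Hs. apply (is_derive_RInt g (fun y => RInt g 0 y) 0 s); auto.
  apply (loc_of s (d - Rabs s)); [lra|]. intros y Hy. apply (@RInt_correct R_CompleteNormedModule).
  apply ex_RInt_sym. intros t Ht. apply Hc.
  assert (Rabs y < d). { replace y with ((y - s) + s) by ring. eapply Rle_lt_trans. apply Rabs_triang. lra. }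
  lra.
Qed.

Section Build.
Variables (phi : R) (x0 : pt) (N : nat) (K : list (R * nat)) (c1 : R) (H : R -> R).
Variables (m d M : R).
Hypotheses (Hm : 0 < m) (HK : goodK K x0 m) (Hdm : d <= m / 4) (Hd1 : d <= 1) (HMd : M * d <= 1/2)
  (HHc : forall t, continuous H t).

Notation rho := (rho phi x0 N K c1 H).
Notation Phi := (Phi phi x0 N K c1 H).

Lemma psi_der b r s : Sset d M b -> r <= d -> (forall t, Rabs t < r -> Phi b t = b t) -> Rabs s < r ->
  is_derive (psi b) s (rho b s - INR N * b s).
Proof.
  intros Hb Hr HF Hs.
  assert (Hsd : Rabs s < d) by lra.
  assert (Hrc : forall t, Rabs t < d -> continuous (fun t => t ^ N * rho b t) t).
  { intros t Ht. apply c_mult. apply c_pow, c_id. apply (rho_cont phi x0 N K c1 H m d M); auto. }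
  destruct (Req_dec s 0) as [->|Hs0].
  - apply is_derive_Reals. intros eps He.
    destruct (ed_cont b 0 (proj1 (Hb 0 Hsd)) (eps / 2) ltac:(lra)) as [del [Hdel Hy]].
    exists (mkposreal del Hdel). intros h Hh0 Hhd. simpl in Hhd.
    assert (E0 : b 0 = rho b 0 / INR (S N)).
    { rewrite <- (HF 0 Hs). unfold Phi, Submission.Phi, W. destruct (Req_EM_T 0 0); [reflexivity|congruence]. }
    assert (HS := INRS_pos N). rewrite S_INR in HS, E0.
    replace ((psi b (0 + h) - psi b 0) / h - (rho b 0 - INR N * b 0)) with (b h - b 0).
    + assert (A := Hy h ltac:(rewrite Rminus_0_r; lra)). lra.
    + unfold psi. rewrite Rplus_0_l. rewrite E0. field. split; lra.
  - apply (is_derive_ext_loc (fun y => RInt (fun t => t ^ N * rho b t) 0 y / y ^ N)).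
    + apply (loc_of s (Rmin (Rabs s) (r - Rabs s))). apply Rmin_pos; [apply Rabs_pos_lt; auto| lra].
      intros y Hy. assert (Hm1 := Rmin_l (Rabs s) (r - Rabs s)). assert (Hm2 := Rmin_r (Rabs s) (r - Rabs s)).
      assert (Hy0 : y <> 0). { intros ->. rewrite Rminus_0_l, Rabs_Ropp in Hy. lra. }
      assert (Hyr : Rabs y < r). { replace y with ((y - s) + s) by ring. eapply Rle_lt_trans. apply Rabs_triang. lra. }
      unfold psi. rewrite <- (HF y Hyr). unfold Phi, Submission.Phi, W. destruct (Req_EM_T y 0); [congruence|].
      simpl. field. split; auto. apply pow_nonzero; auto.
    + eapply der_eq. apply is_derive_div. apply (der_RInt _ d); auto. apply der_pow. apply pow_nonzero; auto.
      assert (Eb : b s = RInt (fun t => t ^ N * rho b t) 0 s / s ^ S N).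
      { rewrite <- (HF s Hs). unfold Phi, Submission.Phi, W. destruct (Req_EM_T s 0); [congruence|reflexivity]. }
      rewrite Eb. destruct N as [|n].
      * simpl. field; auto.
      * simpl pred. generalize (RInt (fun t : R => t ^ S n * Submission.rho phi x0 (S n) K c1 H b t) 0 s). intro I.
        rewrite S_INR. simpl. field. split; auto. apply pow_nonzero; auto.
Qed.

Notation X := (X phi x0).
Notation th := (th phi).

Lemma loc_in s r (P : R -> Prop) : Rabs s < r -> (forall y, Rabs y < r -> P y) -> locally s P.
Proof.
  intros Hs HP. apply (loc_of s (r - Rabs s)). lra. intros y Hy. apply HP.
  replace y with ((y - s) + s) by ring. eapply Rle_lt_trans. apply Rabs_triang. lra.
Qed.

Lemma X_der1 b s : Sset d M b -> Rabs s < d -> is_derive (fun t => fst (X b t)) s (cos (th b s)).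
Proof.
  intros Hb Hs. apply (is_derive_ext (fun t => fst x0 + RInt (fun u => cos (th b u)) 0 t)). intros; reflexivity.
  eapply der_eq. apply der_plus. apply der_const. apply (der_RInt _ d); auto.
  intros; apply c_cos, th_cont, Hb; auto. apply Rplus_0_l.
Qed.
Lemma X_der2 b s : Sset d M b -> Rabs s < d -> is_derive (fun t => snd (X b t)) s (sin (th b s)).
Proof.
  intros Hb Hs. apply (is_derive_ext (fun t => snd x0 + RInt (fun u => sin (th b u)) 0 t)). intros; reflexivity.
  eapply der_eq. apply der_plus. apply der_const. apply (der_RInt _ d); auto.
  intros; apply c_sin, th_cont, Hb; auto. apply Rplus_0_l.
Qed.

Lemma dcurve_X b s : Sset d M b -> Rabs s < d -> dcurve (X b) s = e (th b s).
Proof.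
  intros Hb Hs. unfold dcurve, e. f_equal; apply is_derive_unique. apply X_der1; auto. apply X_der2; auto.
Qed.

Definition thd b s := rho b s - INR N * b s.

Lemma th_der b r s : Sset d M b -> r <= d -> (forall t, Rabs t < r -> Phi b t = b t) -> Rabs s < r ->
  is_derive (th b) s (thd b s).
Proof.
  intros. unfold Submission.th. eapply der_eq. apply der_plus. apply der_const. apply (psi_der b r); auto.
  unfold thd; simpl; apply Rplus_0_l.
Qed.

Lemma dd1_der b r s : Sset d M b -> r <= d -> (forall t, Rabs t < r -> Phi b t = b t) -> Rabs s < r ->
  is_derive (fun u => fst (dcurve (X b) u)) s (- sin (th b s) * thd b s).
Proof.
  intros Hb Hr HF Hs. apply (is_derive_ext_loc (fun u => cos (th b u))).
  apply (loc_in s d). lra. intros y Hy. rewrite dcurve_X; auto.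
  apply der_cos. apply (th_der b r); auto.
Qed.
Lemma dd2_der b r s : Sset d M b -> r <= d -> (forall t, Rabs t < r -> Phi b t = b t) -> Rabs s < r ->
  is_derive (fun u => snd (dcurve (X b) u)) s (cos (th b s) * thd b s).
Proof.
  intros Hb Hr HF Hs. apply (is_derive_ext_loc (fun u => sin (th b u))).
  apply (loc_in s d). lra. intros y Hy. rewrite dcurve_X; auto.
  apply der_sin. apply (th_der b r); auto.
Qed.

Lemma ddcurve_X b r s : Sset d M b -> r <= d -> (forall t, Rabs t < r -> Phi b t = b t) -> Rabs s < r ->
  dcurve (dcurve (X b)) s = (- sin (th b s) * thd b s, cos (th b s) * thd b s).
Proof.
  intros. unfold dcurve at 1. f_equal; apply is_derive_unique.
  apply (dd1_der b r); auto. apply (dd2_der b r); auto.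
Qed.

Lemma thd_cont b s : Sset d M b -> Rabs s < d -> continuous (thd b) s.
Proof.
  intros Hb Hs. unfold thd. apply c_minus. apply (rho_cont phi x0 N K c1 H m d M); auto.
  apply c_mult. apply c_const. apply Hb; auto.
Qed.

Lemma dd_cont1 b r s : Sset d M b -> r <= d -> (forall t, Rabs t < r -> Phi b t = b t) -> Rabs s < r ->
  continuous (fun u => fst (dcurve (dcurve (X b)) u)) s.
Proof.
  intros Hb Hr HF Hs. apply (continuous_ext_loc _ (fun u => - sin (th b u) * thd b u)).
  apply (loc_in s r); auto. intros y Hy. rewrite (ddcurve_X b r); auto.
  apply c_mult. apply c_opp, c_sin, th_cont, Hb; lra. apply thd_cont; auto; lra.
Qed.
Lemma dd_cont2 b r s : Sset d M b -> r <= d -> (forall t, Rabs t < r -> Phi b t = b t) -> Rabs s < r ->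
  continuous (fun u => snd (dcurve (dcurve (X b)) u)) s.
Proof.
  intros Hb Hr HF Hs. apply (continuous_ext_loc _ (fun u => cos (th b u) * thd b u)).
  apply (loc_in s r); auto. intros y Hy. rewrite (ddcurve_X b r); auto.
  apply c_mult. apply c_cos, th_cont, Hb; lra. apply thd_cont; auto; lra.
Qed.

End Build.

Lemma H_bounded (H : R -> R) : (forall t, continuous H t) -> exists Hm, forall t, Rabs t <= 1 -> Rabs (H t) <= Hm.
Proof.
  intros Hc. destruct (continuity_ab_maj (fun t => Rabs (H t)) (-1) 1) as [Mx [HM _]]. lra.
  intros c _. apply ptc. apply (c_comp H Rabs). apply Hc. apply cpt, Rcontinuity_abs.
  exists (Rabs (H Mx)). intros t Ht. apply HM. apply Rabs_le_between in Ht; lra.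
Qed.

Lemma div_le1 X C : 0 <= X -> X <= C -> 0 < C -> X * / C <= 1.
Proof. intros. apply (Rmult_le_reg_r C); auto. rewrite Rmult_assoc, Rinv_l by lra. lra. Qed.

Lemma choose_d m M L (N : nat) : 0 < m -> 0 <= M -> 0 <= L ->
  exists d, 0 < d /\ d <= 1 /\ d <= m / 4 /\ M * d <= 1/2 /\ INR N * 7 * M * M * d <= 1 /\ (INR N * 7 * M + L) * d <= 1/2.
Proof.
  intros Hm HM HL. assert (HN := pos_INR N).
  assert (H1 : 0 <= INR N * 7 * M * M) by (repeat apply Rmult_le_pos; lra).
  assert (H2 : 0 <= INR N * 7 * M + L) by (assert (0 <= INR N * 7 * M) by (repeat apply Rmult_le_pos; lra); lra).
  assert (H3 : 0 < 4 / m) by (apply Rdiv_lt_0_compat; lra).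
  set (C := 1 + 4 / m + 2 * M + INR N * 7 * M * M + 2 * (INR N * 7 * M + L)).
  assert (HC : 0 < C) by (unfold C; lra).
  exists (/ C). repeat split.
  - apply Rinv_0_lt_compat; auto.
  - rewrite <- (Rmult_1_l (/ C)). apply div_le1; unfold C; lra.
  - assert (A : 4 / m * / C <= 1) by (apply div_le1; unfold C; lra).
    apply (Rmult_le_reg_l (4 / m)); auto. replace (4 / m * (m / 4)) with 1 by (field; lra). lra.
  - assert (A : 2 * M * / C <= 1) by (apply div_le1; unfold C; lra). lra.
  - apply div_le1; unfold C; lra.
  - assert (A : 2 * (INR N * 7 * M + L) * / C <= 1) by (apply div_le1; unfold C; lra). lra.
Qed.

Definition cl (d s : R) := Rmax (- (d / 2)) (Rmin (d / 2) s).
Lemma cl_bound d s : 0 < d -> Rabs (cl d s) <= d / 2.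
Proof. intros. unfold cl, Rmax, Rmin. repeat destruct Rle_dec; apply Rabs_le; lra. Qed.
Lemma cl_id d s : Rabs s <= d / 2 -> cl d s = s.
Proof. intros Hs. apply Rabs_le_between in Hs. unfold cl, Rmax, Rmin. repeat destruct Rle_dec; lra. Qed.
Lemma cl_lip d x y : 0 < d -> Rabs (cl d y - cl d x) <= Rabs (y - x).
Proof. intros. unfold cl, Rmax, Rmin. repeat destruct Rle_dec; unfold Rabs; repeat destruct Rcase_abs; lra. Qed.
Lemma cl_cont d x : 0 < d -> continuous (cl d) x.
Proof.
  intros Hd. apply cont_ed. intros eps He. exists eps. split; auto. intros y Hy.
  eapply Rle_trans. apply cl_lip; auto. lra.
Qed.

Lemma sc1 x : sin x ^ 2 + cos x ^ 2 = 1.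
Proof. assert (A := sin2_cos2 x). unfold Rsqr in A. simpl. lra. Qed.

Lemma trig1 phi ps : - sin phi * cos (phi + PI / 2 + ps) + cos phi * sin (phi + PI / 2 + ps) = cos ps.
Proof.
  replace (phi + PI / 2 + ps) with ((phi + ps) + PI / 2) by ring.
  rewrite (cos_plus (phi + ps) (PI / 2)), (sin_plus (phi + ps) (PI / 2)), cos_PI2, sin_PI2, (cos_plus phi ps), (sin_plus phi ps).
  transitivity ((sin phi ^ 2 + cos phi ^ 2) * cos ps). ring. rewrite sc1; ring.
Qed.
Lemma trig2 phi ps : cos phi * cos (phi + PI / 2 + ps) + sin phi * sin (phi + PI / 2 + ps) = - sin ps.
Proof.
  replace (phi + PI / 2 + ps) with ((phi + ps) + PI / 2) by ring.
  rewrite (cos_plus (phi + ps) (PI / 2)), (sin_plus (phi + ps) (PI / 2)), cos_PI2, sin_PI2, (cos_plus phi ps), (sin_plus phi ps).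
  transitivity (- (sin phi ^ 2 + cos phi ^ 2) * sin ps). ring. rewrite sc1; ring.
Qed.

Lemma dot_e_th phi b s : dot (e phi) (e (th phi b s)) = - sin (psi b s).
Proof. unfold dot, e, th; simpl. apply trig2. Qed.

Lemma dot_perp_X phi x0 d M b s : Sset d M b -> Rabs s < d -> dot (perp (e phi)) x0 = 0 ->
  dot (perp (e phi)) (X phi x0 b s) = s * Aop b s.
Proof.
  intros Hb Hs H0. unfold dot, perp, e, X in *; simpl in *.
  assert (C1 : ex_RInt (fun t => cos (th phi b t)) 0 s) by (apply ex_RInt_sym; intros; apply c_cos, th_cont, Hb; lra).
  assert (C2 : ex_RInt (fun t => sin (th phi b t)) 0 s) by (apply ex_RInt_sym; intros; apply c_sin, th_cont, Hb; lra).
  assert (E : RInt (fun t => cos (psi b t)) 0 s = - sin phi * RInt (fun t => cos (th phi b t)) 0 s + cos phi * RInt (fun t => sin (th phi b t)) 0 s).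
  { rewrite (RInt_ext _ (fun t => plus (scal (- sin phi) (cos (th phi b t))) (scal (cos phi) (sin (th phi b t))))).
    rewrite (@RInt_plus R_CompleteNormedModule), !(@RInt_scal R_CompleteNormedModule); auto.
    apply (@ex_RInt_scal R_CompleteNormedModule); auto. apply (@ex_RInt_scal R_CompleteNormedModule); auto.
    intros t _. unfold plus, scal; simpl; unfold mult; simpl. unfold th. rewrite trig1. reflexivity. }
  assert (A : s * Aop b s = RInt (fun t => cos (psi b t)) 0 s).
  { unfold Aop, W. destruct (Req_EM_T s 0) as [->|Hs0].
    - rewrite RInt_point, Rmult_0_l; reflexivity.
    - rewrite (RInt_ext (fun t => t ^ 0 * cos (psi b t)) (fun t => cos (psi b t))) by (intros; simpl; ring).
      generalize (RInt (fun t => cos (psi b t)) 0 s). intro I. simpl; field; auto. }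
  rewrite A, E. generalize (RInt (fun t => cos (th phi b t)) 0 s) (RInt (fun t => sin (th phi b t)) 0 s).
  intros I1 I2. lra.
Qed.

Lemma perp_dot a t : dot (perp (- sin a * t, cos a * t)) (e a) = - t.
Proof. unfold dot, perp, e; simpl. transitivity (- t * (sin a ^ 2 + cos a ^ 2)). ring. rewrite sc1; ring. Qed.

Lemma Phi_fix_T phi x0 N K c1 H d b t : Rabs t < d / 2 ->
  Phi phi x0 N K c1 H b (cl d t) = b t -> Phi phi x0 N K c1 H b t = b t.
Proof. intros Ht E. rewrite cl_id in E; auto; lra. Qed.

Theorem core_exist (J K : list (R * nat)) phi x0 (N n : nat) H m :
  0 < m -> goodK K x0 m -> (forall t, continuous H t) -> dot (perp (e phi)) x0 = 0 ->
  (forall x v, sing_sum J x v = INR N * dot (e phi) v / dot (perp (e phi)) x + sing_sum K x v) ->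
  (forall p, In p J -> fst p = phi \/ In p K) ->
  exists eps x, is_local_solution J n H eps x /\ x 0 = x0 /\ dcurve x 0 = e (phi + PI / 2).
Proof.
  intros Hm HK HHc H0 Hdec HJ.
  set (c1 := INR n - 1).
  destruct (H_bounded H HHc) as [Hb0 HHb].
  assert (HHb0 : 0 <= Hb0) by (eapply Rle_trans; [apply Rabs_pos| apply (HHb 0)]; rewrite Rabs_R0; lra).
  set (Gm := sum_coef K * (4 / m) + Rabs c1 * Hb0).
  assert (HGm : 0 <= Gm).
  { unfold Gm. assert (0 <= sum_coef K * (4 / m)). apply Rmult_le_pos. apply sum_coef_nonneg.
    left; apply Rdiv_lt_0_compat; lra. assert (0 <= Rabs c1 * Hb0) by (apply Rmult_le_pos; auto; apply Rabs_pos). lra. }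
  set (M := Gm + 1).
  assert (HLg : 0 <= Lg K m).
  { unfold Lg. apply Rmult_le_pos. apply sum_coef_nonneg.
    assert (0 < 4 / m) by (apply Rdiv_lt_0_compat; lra). assert (0 < 16 / (m * m)) by (apply Rdiv_lt_0_compat; nra). lra. }
  destruct (choose_d m M (Lg K m) N Hm ltac:(unfold M; lra) HLg) as [d [Hd0 [Hd1 [Hdm [HMd [HNM Hcon]]]]]].
  set (T := fun b : R -> R => fun s => Phi phi x0 N K c1 H b (cl d s)).
  destruct (fixed_point d M T (fun _ => 0) Hd0) as [b [Hb HF]].
  - apply Sset_zero. unfold M; lra.
  - intros b Hb t Ht. assert (Hc := cl_bound d t Hd0). split.
    + unfold T. apply (c_comp (cl d) (Phi phi x0 N K c1 H b)). apply cl_cont; auto.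
      apply (Phi_cont phi x0 N K c1 H m d M); auto; lra.
    + unfold T. eapply Rle_trans. apply (Phi_bound phi x0 N K c1 H m d M Hb0); auto; lra.
      fold Gm. replace (INR N * 7 * M * d * M) with (INR N * 7 * M * M * d) by ring. unfold M in *. lra.
  - intros b1 b2 D H1 H2 HD t Ht. unfold T. assert (Hc := cl_bound d t Hd0).
    eapply Rle_trans. apply (Phi_lip phi x0 N K c1 H m d M); auto; lra.
    assert (HD0 : 0 <= D) by (eapply Rle_trans; [apply Rabs_pos|apply (HD t Ht)]). nra.
  - assert (HFx : forall t, Rabs t < d / 2 -> Phi phi x0 N K c1 H b t = b t).
    { intros t Ht. apply (Phi_fix_T phi x0 N K c1 H d b t Ht). apply HF; lra. }
    exists (d / 2), (X phi x0 b). split; [|split].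
    + split; [lra|]. split; [|split].
      * intros s Hs. repeat split.
        -- eexists; eapply (X_der1 phi x0 d M); eauto; lra.
        -- eexists; eapply (X_der2 phi x0 d M); eauto; lra.
        -- eexists; eapply (dd1_der phi x0 N K c1 H m d M); eauto; lra.
        -- eexists; eapply (dd2_der phi x0 N K c1 H m d M); eauto; lra.
        -- eapply (dd_cont1 phi x0 N K c1 H m d M); eauto; lra.
        -- eapply (dd_cont2 phi x0 N K c1 H m d M); eauto; lra.
      * intros s Hs. rewrite (dcurve_X phi x0 d M) by (auto; lra). unfold dot, e; simpl.
        assert (A := sc1 (th phi b s)). simpl in A. lra.
      * intros s [Hs0 Hs]. assert (Hsn : s <> 0) by (intro Z; rewrite Z, Rabs_R0 in Hs0; lra).
        assert (HA := A_pos d M b s Hb ltac:(lra) HMd).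
        split.
        -- intros p Hp. destruct (HJ p Hp) as [E|Hin].
           ++ rewrite E, (dot_perp_X phi x0 d M) by (auto; lra).
              intro Z. apply Rmult_integral in Z. destruct Z; lra.
           ++ intro Z. assert (A := den_nz phi x0 K m d M b s p Hm HK Hdm Hb ltac:(lra) Hin).
              rewrite Z, Rabs_R0 in A. lra.
        -- rewrite (ddcurve_X phi x0 N K c1 H m d M Hm HK Hdm HMd HHc b (d / 2)) by (auto; lra).
           rewrite (dcurve_X phi x0 d M) by (auto; lra).
           rewrite perp_dot, Hdec, (dot_perp_X phi x0 d M) by (auto; lra). rewrite dot_e_th.
           unfold thd, Submission.rho, Sn, Gop. destruct (Req_EM_T s 0) as [Z|_]; [lra|].
           fold c1. field. split; lra.
    + unfold X. rewrite !RInt_point. destruct x0; simpl. unfold zero; simpl. f_equal; ring.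
    + rewrite (dcurve_X phi x0 d M) by (auto; rewrite Rabs_R0; lra). unfold th, psi. f_equal; ring.
Qed.

Lemma atan_cs p q : 0 < p -> p ^ 2 + q ^ 2 = 1 -> cos (atan (q / p)) = p /\ sin (atan (q / p)) = q.
Proof.
  intros Hp Hpq.
  assert (E : sqrt (1 + (q / p)²) = / p).
  { replace (1 + (q / p)²) with ((/ p)²). apply sqrt_Rsqr. left; apply Rinv_0_lt_compat; auto.
    unfold Rsqr. replace (q / p * (q / p)) with (q ^ 2 / p ^ 2) by (field; lra). replace (q ^ 2) with (1 - p ^ 2) by lra. field. lra. }
  rewrite cos_atan, sin_atan, E. split; field; lra.
Qed.

Lemma atan0 : atan 0 = 0.
Proof.
  assert (A := atan_right_inv 0). 
  destruct (atan_bound 0) as [B1 B2].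
  apply tan_inj; auto. split; lra. rewrite A, tan_0; auto.
Qed.

Lemma der_scal (f : R -> R) x k df : is_derive f x df -> is_derive (fun t => k * f t) x (k * df).
Proof. apply is_derive_scal. Qed.
Lemma der_opp (f : R -> R) x df : is_derive f x df -> is_derive (fun t => - f t) x (- df).
Proof. intros. eapply der_eq. apply (is_derive_ext (fun t => -1 * f t)). intros; simpl; ring. apply der_scal; eauto. simpl; ring. Qed.
Lemma der_atan (f : R -> R) x df : is_derive f x df -> is_derive (fun t => atan (f t)) x (df * / (1 + f x ^ 2)).
Proof. intros. apply (der_comp atan f); auto. apply is_derive_Reals, derivable_pt_lim_atan. Qed.

Lemma eq_by_cont (f g : R -> R) r : 0 < r -> continuous f 0 -> continuous g 0 ->
  (forall y, 0 < Rabs y < r -> f y = g y) -> f 0 = g 0.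
Proof.
  intros Hr Hf Hg Hfg. apply Rminus_diag_uniq. apply Rabs_eq_0.
  apply Rle_antisym; [|apply Rabs_pos]. apply le_all_eps. intros e He.
  destruct (ed_cont f 0 Hf (e / 2) ltac:(lra)) as [d1 [Hd1 A1]].
  destruct (ed_cont g 0 Hg (e / 2) ltac:(lra)) as [d2 [Hd2 A2]].
  set (y := Rmin (Rmin d1 d2) r / 2).
  assert (Hm := Rmin_l (Rmin d1 d2) r). assert (Hm2 := Rmin_r (Rmin d1 d2) r).
  assert (Hm3 := Rmin_l d1 d2). assert (Hm4 := Rmin_r d1 d2).
  assert (Hpos : 0 < Rmin (Rmin d1 d2) r) by (repeat apply Rmin_pos; auto).
  assert (Hy : Rabs y = y) by (apply Rabs_right; unfold y; lra).
  assert (B1 := A1 y ltac:(rewrite Rminus_0_r, Hy; unfold y; lra)).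
  assert (B2 := A2 y ltac:(rewrite Rminus_0_r, Hy; unfold y; lra)).
  rewrite (Hfg y) in B1 by (rewrite Hy; unfold y; lra).
  replace (f 0 - g 0) with (- (g y - f 0) + (g y - g 0)) by ring.
  eapply Rle_trans. apply Rabs_triang. rewrite Rabs_Ropp. lra.
Qed.

Section Extract.
Variables (J K : list (R * nat)) (phi : R) (x0 : pt) (N n : nat) (H : R -> R) (eps : R) (x : R -> pt).
Hypotheses (Hsol : is_local_solution J n H eps x) (Hx0 : x 0 = x0) (Hdx0 : dcurve x 0 = e (phi + PI / 2)).

Definition U1 s := fst (dcurve x s).
Definition U2 s := snd (dcurve x s).
Definition pp s := - sin phi * U1 s + cos phi * U2 s.
Definition qq s := - (cos phi * U1 s + sin phi * U2 s).
Definition ps s := atan (qq s / pp s).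
Definition bx s := if Req_EM_T s 0 then Derive ps 0 else ps s / s.

Lemma eps_pos : 0 < eps.
Proof. apply Hsol. Qed.

Lemma C2x s : Rabs s < eps ->
    ex_derive (fun u => fst (x u)) s /\ ex_derive (fun u => snd (x u)) s /\
    ex_derive U1 s /\ ex_derive U2 s.
Proof. intros Hs. destruct Hsol as [_ [HC _]]. destruct (HC s Hs) as [A [B [C [D _]]]]. repeat split; auto. Qed.

Lemma U1_der s : Rabs s < eps -> is_derive U1 s (Derive U1 s).
Proof. intros Hs. apply Derive_correct. apply C2x; auto. Qed.
Lemma U2_der s : Rabs s < eps -> is_derive U2 s (Derive U2 s).
Proof. intros Hs. apply Derive_correct. apply C2x; auto. Qed.
Lemma U1_cont s : Rabs s < eps -> continuous U1 s.
Proof. intros Hs. apply (@ex_derive_continuous R_AbsRing R_NormedModule). apply C2x; auto. Qed.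
Lemma U2_cont s : Rabs s < eps -> continuous U2 s.
Proof. intros Hs. apply (@ex_derive_continuous R_AbsRing R_NormedModule). apply C2x; auto. Qed.

Lemma pp_der s : Rabs s < eps -> is_derive pp s (- sin phi * Derive U1 s + cos phi * Derive U2 s).
Proof. intros Hs. apply der_plus; apply der_scal; [apply U1_der|apply U2_der]; auto. Qed.
Lemma qq_der s : Rabs s < eps -> is_derive qq s (- (cos phi * Derive U1 s + sin phi * Derive U2 s)).
Proof. intros Hs. apply der_opp. apply der_plus; apply der_scal; [apply U1_der|apply U2_der]; auto. Qed.
Lemma pp_cont s : Rabs s < eps -> continuous pp s.
Proof. intros Hs. apply (@ex_derive_continuous R_AbsRing R_NormedModule). eexists; apply pp_der; auto. Qed.

Lemma pp0 : pp 0 = 1.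
Proof. unfold pp, U1, U2. rewrite Hdx0. simpl. rewrite <- (Rplus_0_r (phi + PI / 2)). rewrite trig1. apply cos_0. Qed.
Lemma qq0 : qq 0 = 0.
Proof.
  unfold qq, U1, U2. rewrite Hdx0. simpl. rewrite <- (Rplus_0_r (phi + PI / 2)). rewrite trig2, sin_0. ring.
Qed.

Lemma pq_unit s : Rabs s < eps -> pp s ^ 2 + qq s ^ 2 = 1.
Proof.
  intros Hs. destruct Hsol as [_ [_ [HU _]]]. assert (A := HU s Hs). unfold dot in A.
  unfold pp, qq, U1, U2. transitivity ((sin phi ^ 2 + cos phi ^ 2) * (fst (dcurve x s) * fst (dcurve x s) + snd (dcurve x s) * snd (dcurve x s))).
  ring. rewrite sc1, A. ring.
Qed.

Lemma r1_ex : exists r1, 0 < r1 /\ r1 <= eps /\ forall s, Rabs s < r1 -> 1/2 < pp s.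
Proof.
  assert (He := eps_pos).
  destruct (ed_cont pp 0 (pp_cont 0 ltac:(rewrite Rabs_R0; lra)) (1/4) ltac:(lra)) as [d [Hd A]].
  exists (Rmin d eps). split. apply Rmin_pos; auto. split. apply Rmin_r.
  intros s Hs. assert (B := A s ltac:(rewrite Rminus_0_r; assert (Z := Rmin_l d eps); lra)).
  rewrite pp0 in B. apply Rabs_le_between in B. lra.
Qed.

Lemma ps0 : ps 0 = 0.
Proof. unfold ps. rewrite qq0, pp0. unfold Rdiv. rewrite Rmult_0_l. apply atan0. Qed.

Lemma psi_bx s : psi bx s = ps s.
Proof.
  unfold psi, bx. destruct (Req_EM_T s 0) as [->|Hs]. rewrite ps0; ring. field; auto.
Qed.

Section R1.
Variable r1 : R.
Hypotheses (Hr1 : 0 < r1) (Hr1e : r1 <= eps) (Hpp : forall s, Rabs s < r1 -> 1/2 < pp s).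

Lemma u_repr s : Rabs s < r1 -> dcurve x s = e (phi + PI / 2 + ps s).
Proof.
  intros Hs. assert (Hp := Hpp s Hs). destruct (atan_cs (pp s) (qq s)) as [Ec Es]. lra. apply pq_unit; lra.
  fold (ps s) in Ec, Es. unfold e.
  replace (phi + PI / 2 + ps s) with ((phi + ps s) + PI / 2) by ring.
  rewrite (cos_plus (phi + ps s) (PI / 2)), (sin_plus (phi + ps s) (PI / 2)), cos_PI2, sin_PI2,
    (cos_plus phi (ps s)), (sin_plus phi (ps s)), Ec, Es.
  unfold pp, qq, U1, U2. destruct (dcurve x s) as [a b]; simpl. f_equal.
  - transitivity ((sin phi ^ 2 + cos phi ^ 2) * a). rewrite sc1; ring. ring.
  - transitivity ((sin phi ^ 2 + cos phi ^ 2) * b). rewrite sc1; ring. ring.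
Qed.

Lemma ps_der s : Rabs s < r1 -> is_derive ps s (Derive ps s).
Proof.
  intros Hs. apply Derive_correct. eexists. apply der_atan. apply is_derive_div.
  apply qq_der; lra. apply pp_der; lra. assert (Hp := Hpp s Hs). lra.
Qed.

Lemma ps_cont s : Rabs s < r1 -> continuous ps s.
Proof. intros Hs. apply (@ex_derive_continuous R_AbsRing R_NormedModule). eexists; apply ps_der; auto. Qed.

Lemma bx_cont s : Rabs s < r1 -> continuous bx s.
Proof.
  intros Hs. destruct (Req_dec s 0) as [->|Hs0].
  - apply cont_ed. intros e0 He0.
    assert (D := ps_der 0 Hs). apply is_derive_Reals in D.
    destruct (D e0 He0) as [del Hdel].
    exists del. split. apply cond_pos. intros y Hy. rewrite Rminus_0_r in Hy.
    unfold bx. destruct (Req_EM_T 0 0) as [_|]; [|congruence].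
    destruct (Req_EM_T y 0) as [->|Hy0]. rewrite Rminus_eq_0, Rabs_R0; lra.
    left. assert (A := Hdel y Hy0 Hy). rewrite Rplus_0_l, ps0, Rminus_0_r in A. exact A.
  - apply (continuous_ext_loc _ (fun y => ps y / y)).
    + apply (loc_of s (Rmin (Rabs s) (r1 - Rabs s))). apply Rmin_pos; [apply Rabs_pos_lt; auto|lra].
      intros y Hy. unfold bx. destruct (Req_EM_T y 0) as [->|]; auto.
      rewrite Rminus_0_l, Rabs_Ropp in Hy. assert (Z := Rmin_l (Rabs s) (r1 - Rabs s)). lra.
    + apply c_div. apply ps_cont; auto. apply c_id. auto.
Qed.

Lemma X_eq s : Rabs s < r1 -> X phi x0 bx s = x s.
Proof.
  intros Hs. unfold X.
  assert (E1 : RInt (fun t => cos (th phi bx t)) 0 s = fst (x s) - fst (x 0)).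
  { rewrite (RInt_ext _ (Derive (fun u => fst (x u)))).
    - apply RInt_Derive.
      + intros t Ht. apply C2x. assert (Rabs t <= Rabs s) by (unfold Rmin, Rmax in Ht; destruct (Rle_dec 0 s); unfold Rabs; repeat destruct Rcase_abs; lra). lra.
      + intros t Ht. assert (Rabs t <= Rabs s) by (unfold Rmin, Rmax in Ht; destruct (Rle_dec 0 s); unfold Rabs; repeat destruct Rcase_abs; lra).
        exact (U1_cont t ltac:(lra)).
    - intros t Ht. assert (Rabs t <= Rabs s) by (unfold Rmin, Rmax in Ht; destruct (Rle_dec 0 s); unfold Rabs; repeat destruct Rcase_abs; lra).
      change (Derive (fun u => fst (x u)) t) with (fst (dcurve x t)). rewrite u_repr by lra.
      unfold th. rewrite psi_bx. reflexivity. }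
  assert (E2 : RInt (fun t => sin (th phi bx t)) 0 s = snd (x s) - snd (x 0)).
  { rewrite (RInt_ext _ (Derive (fun u => snd (x u)))).
    - apply RInt_Derive.
      + intros t Ht. apply C2x. assert (Rabs t <= Rabs s) by (unfold Rmin, Rmax in Ht; destruct (Rle_dec 0 s); unfold Rabs; repeat destruct Rcase_abs; lra). lra.
      + intros t Ht. assert (Rabs t <= Rabs s) by (unfold Rmin, Rmax in Ht; destruct (Rle_dec 0 s); unfold Rabs; repeat destruct Rcase_abs; lra).
        exact (U2_cont t ltac:(lra)).
    - intros t Ht. assert (Rabs t <= Rabs s) by (unfold Rmin, Rmax in Ht; destruct (Rle_dec 0 s); unfold Rabs; repeat destruct Rcase_abs; lra).
      change (Derive (fun u => snd (x u)) t) with (snd (dcurve x t)). rewrite u_repr by lra.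
      unfold th. rewrite psi_bx. reflexivity. }
  rewrite E1, E2, Hx0. destruct (x s) as [a b]. destruct x0 as [a0 b0]. simpl. f_equal; ring.
Qed.

Lemma dd_repr t : Rabs t < r1 ->
  dcurve (dcurve x) t = (- sin (phi + PI / 2 + ps t) * Derive ps t, cos (phi + PI / 2 + ps t) * Derive ps t).
Proof.
  intros Ht. unfold dcurve at 1. f_equal.
  - rewrite (Derive_ext_loc _ (fun u => cos (phi + PI / 2 + ps u))).
    + apply is_derive_unique. apply (der_cos (fun u => phi + PI / 2 + ps u)). eapply der_eq. apply der_plus. apply der_const. apply ps_der; auto.
      simpl; ring.
    + apply (loc_in t r1); auto. intros y Hy. change (fst (dcurve x y) = cos (phi + PI / 2 + ps y)).
      rewrite u_repr; auto.
  - rewrite (Derive_ext_loc _ (fun u => sin (phi + PI / 2 + ps u))).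
    + apply is_derive_unique. apply (der_sin (fun u => phi + PI / 2 + ps u)). eapply der_eq. apply der_plus. apply der_const. apply ps_der; auto.
      simpl; ring.
    + apply (loc_in t r1); auto. intros y Hy. change (snd (dcurve x y) = sin (phi + PI / 2 + ps y)).
      rewrite u_repr; auto.
Qed.

Lemma ps_ode t : 0 < Rabs t < r1 ->
  (forall x v, sing_sum J x v = INR N * dot (e phi) v / dot (perp (e phi)) x + sing_sum K x v) ->
  Derive ps t = INR N * (- sin (ps t)) / dot (perp (e phi)) (x t) + sing_sum K (x t) (dcurve x t) - (INR n - 1) * H t.
Proof.
  intros [Ht0 Ht] Hdec. destruct Hsol as [_ [_ [_ Hode]]].
  destruct (Hode t ltac:(lra)) as [_ E].
  rewrite (dd_repr t Ht), Hdec in E. rewrite (u_repr t Ht) in *. rewrite perp_dot in E.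
  assert (T2 : dot (e phi) (e (phi + PI / 2 + ps t)) = - sin (ps t)) by (unfold dot, e; simpl; apply trig2).
  rewrite T2 in E. lra.
Qed.

Lemma pow_pred_div (k : nat) t : (1 <= k)%nat -> t <> 0 -> t ^ pred k = t ^ k / t.
Proof. intros Hk Ht. destruct k as [|k']; [lia|]. simpl. field; auto. Qed.
Lemma pow0_pos (k : nat) : (1 <= k)%nat -> 0 ^ k = 0.
Proof. intros Hk. destruct k as [|k']; [lia|]. simpl; ring. Qed.

Lemma bx_fix m r Mb : (1 <= N)%nat -> 0 < m -> goodK K x0 m -> (forall t, continuous H t) ->
  dot (perp (e phi)) x0 = 0 ->
  (forall x v, sing_sum J x v = INR N * dot (e phi) v / dot (perp (e phi)) x + sing_sum K x v) ->
  0 < r -> r <= r1 -> r <= m / 4 -> Mb * r <= 1/2 -> Sset r Mb bx ->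
  forall s, Rabs s < r -> Phi phi x0 N K (INR n - 1) H bx s = bx s.
Proof.
  intros HN Hm HK HHc H0 Hdec Hr Hrr1 Hrm HMr Hb.
  set (rh := Submission.rho phi x0 N K (INR n - 1) H bx).
  assert (Hg : forall t, Rabs t < r -> is_derive (fun t => t ^ N * ps t) t (t ^ N * rh t)).
  { intros t Ht. eapply der_eq. apply der_mult. apply der_pow. apply ps_der; lra.
    destruct (Req_dec t 0) as [->|Ht0].
    - rewrite ps0, (pow0_pos N HN). simpl. ring.
    - rewrite ps_ode by first [exact Hdec | split; [apply Rabs_pos_lt; auto| lra]].
      assert (HX := X_eq t ltac:(lra)).
      rewrite <- HX, (dot_perp_X phi x0 r Mb bx t Hb Ht H0).
      assert (HA := A_pos r Mb bx t Hb Ht HMr).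
      unfold rh, Submission.rho, Sn, Gop. destruct (Req_EM_T t 0) as [Z|_]; [lra|].
      assert (Ebx : bx t = ps t / t) by (unfold bx; destruct (Req_EM_T t 0); [lra|auto]).
      assert (Hth : e (th phi bx t) = dcurve x t) by (rewrite u_repr by lra; unfold th; rewrite psi_bx; auto).
      rewrite psi_bx, Ebx, Hth. rewrite (pow_pred_div N t HN Ht0). field. split; lra. }
  assert (Hint : forall s, Rabs s < r -> RInt (fun t => t ^ N * rh t) 0 s = s ^ N * ps s).
  { intros s Hs. apply is_RInt_unique.
    replace (s ^ N * ps s) with (minus (s ^ N * ps s) (0 ^ N * ps 0)).
    apply (is_RInt_derive (fun t => t ^ N * ps t)).
    - intros t Ht. apply Hg. assert (Rabs t <= Rabs s) by (unfold Rmin, Rmax in Ht; destruct (Rle_dec 0 s); unfold Rabs; repeat destruct Rcase_abs; lra). lra.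
    - intros t Ht. assert (Rabs t <= Rabs s) by (unfold Rmin, Rmax in Ht; destruct (Rle_dec 0 s); unfold Rabs; repeat destruct Rcase_abs; lra).
      apply c_mult. apply c_pow, c_id. apply (rho_cont phi x0 N K (INR n - 1) H m r Mb); auto; lra.
    - rewrite ps0. unfold minus, plus, opp; simpl. ring. }
  assert (Hne : forall s, 0 < Rabs s < r -> Phi phi x0 N K (INR n - 1) H bx s = bx s).
  { intros s [Hs0 Hs]. assert (Hsn : s <> 0) by (intro Z; rewrite Z, Rabs_R0 in Hs0; lra).
    unfold Phi, W, bx. destruct (Req_EM_T s 0) as [Z|_]; [lra|].
    fold rh. rewrite Hint by auto. simpl. field. split; auto. apply pow_nonzero; auto. }
  intros s Hs. destruct (Req_dec s 0) as [->|Hs0].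
  - apply (eq_by_cont _ _ r); auto.
    + apply (Phi_cont phi x0 N K (INR n - 1) H m r Mb); auto; lra.
    + apply Hb; auto.
  - apply Hne. split; auto. apply Rabs_pos_lt; auto.
Qed.

End R1.
End Extract.

Lemma X_ext phi x0 (b1 b2 : R -> R) s : (forall t, Rabs t <= Rabs s -> b1 t = b2 t) -> X phi x0 b1 s = X phi x0 b2 s.
Proof.
  intros Hb. unfold X. f_equal; f_equal; apply RInt_ext; intros t Ht;
  (assert (Rabs t <= Rabs s) by (unfold Rmin, Rmax in Ht; destruct (Rle_dec 0 s); unfold Rabs; repeat destruct Rcase_abs; lra));
  unfold th, psi; rewrite Hb; auto.
Qed.

Lemma local_bound (b : R -> R) : continuous b 0 -> exists del, 0 < del /\ forall s, Rabs s < del -> Rabs (b s) <= Rabs (b 0) + 1.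
Proof.
  intros Hc. destruct (ed_cont b 0 Hc 1 ltac:(lra)) as [del [Hd A]]. exists del. split; auto.
  intros s Hs. assert (B := A s ltac:(rewrite Rminus_0_r; auto)).
  replace (b s) with ((b s - b 0) + b 0) by ring. eapply Rle_trans. apply Rabs_triang. lra.
Qed.

Theorem core_unique (J K : list (R * nat)) phi x0 (N n : nat) H m :
  (1 <= N)%nat -> 0 < m -> goodK K x0 m -> (forall t, continuous H t) -> dot (perp (e phi)) x0 = 0 ->
  (forall x v, sing_sum J x v = INR N * dot (e phi) v / dot (perp (e phi)) x + sing_sum K x v) ->
  forall (eps1 eps2 : R) (x y : R -> R * R),
        is_local_solution J n H eps1 x -> x 0 = x0 ->
        dcurve x 0 = e (phi + PI / 2) ->
        is_local_solution J n H eps2 y -> y 0 = x0 ->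
        dcurve y 0 = e (phi + PI / 2) ->
        exists delta, 0 < delta /\ forall s, Rabs s < delta -> x s = y s.
Proof.
  intros HN Hm HK HHc H0 Hdec eps1 eps2 x y Hsx Hx0 Hdx Hsy Hy0 Hdy.
  destruct (r1_ex J phi n H eps1 x Hsx Hdx) as [r1x [Hr1x [Hr1xe Hppx]]].
  destruct (r1_ex J phi n H eps2 y Hsy Hdy) as [r1y [Hr1y [Hr1ye Hppy]]].
  set (bX := bx phi x). set (bY := bx phi y).
  assert (CX : forall s, Rabs s < r1x -> continuous bX s).
  { intros s Hs. apply (bx_cont J phi n H eps1 x Hsx Hdx r1x Hr1xe Hppx s Hs). }
  assert (CY : forall s, Rabs s < r1y -> continuous bY s).
  { intros s Hs. apply (bx_cont J phi n H eps2 y Hsy Hdy r1y Hr1ye Hppy s Hs). }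
  destruct (local_bound bX (CX 0 ltac:(rewrite Rabs_R0; lra))) as [dx [Hdx0 Bx]].
  destruct (local_bound bY (CY 0 ltac:(rewrite Rabs_R0; lra))) as [dy [Hdy0 By]].
  set (Mb := Rabs (bX 0) + Rabs (bY 0) + 1).
  assert (HMb : 0 <= Mb) by (unfold Mb; assert (Z1 := Rabs_pos (bX 0)); assert (Z2 := Rabs_pos (bY 0)); lra).
  assert (HLg : 0 <= Lg K m).
  { unfold Lg. apply Rmult_le_pos. apply sum_coef_nonneg.
    assert (0 < 4 / m) by (apply Rdiv_lt_0_compat; lra). assert (0 < 16 / (m * m)) by (apply Rdiv_lt_0_compat; nra). lra. }
  destruct (choose_d m Mb (Lg K m) N Hm HMb HLg) as [d [Hd0 [Hd1 [Hdm [HMd [_ Hcon]]]]]].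
  set (r := Rmin (Rmin (Rmin r1x r1y) (Rmin dx dy)) d).
  assert (Hr0 : 0 < r) by (unfold r; repeat apply Rmin_pos; auto).
  assert (Hrd : r <= d) by apply Rmin_r.
  assert (Hrx : r <= r1x) by (unfold r; eapply Rle_trans; [apply Rmin_l|]; eapply Rle_trans; apply Rmin_l).
  assert (Hry : r <= r1y) by (unfold r; eapply Rle_trans; [apply Rmin_l|]; eapply Rle_trans; [apply Rmin_l|apply Rmin_r]).
  assert (Hrdx : r <= dx) by (unfold r; eapply Rle_trans; [apply Rmin_l|]; eapply Rle_trans; [apply Rmin_r|apply Rmin_l]).
  assert (Hrdy : r <= dy) by (unfold r; eapply Rle_trans; [apply Rmin_l|]; eapply Rle_trans; [apply Rmin_r|apply Rmin_r]).
  assert (HMr : Mb * r <= 1 / 2) by (assert (Mb * r <= Mb * d) by (apply Rmult_le_compat_l; auto); lra).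
  assert (SX : Sset r Mb bX).
  { intros t Ht. split. apply CX; lra. eapply Rle_trans. apply Bx; lra. unfold Mb. assert (Z := Rabs_pos (bY 0)). lra. }
  assert (SY : Sset r Mb bY).
  { intros t Ht. split. apply CY; lra. eapply Rle_trans. apply By; lra. unfold Mb. assert (Z := Rabs_pos (bX 0)). lra. }
  set (c1 := INR n - 1).
  assert (FX : forall s, Rabs s < r -> Phi phi x0 N K c1 H bX s = bX s).
  { intros s Hs. apply (bx_fix J K phi x0 N n H eps1 x Hsx Hx0 Hdx r1x Hr1xe Hppx m r Mb); auto; lra. }
  assert (FY : forall s, Rabs s < r -> Phi phi x0 N K c1 H bY s = bY s).
  { intros s Hs. apply (bx_fix J K phi x0 N n H eps2 y Hsy Hy0 Hdy r1y Hr1ye Hppy m r Mb); auto; lra. }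
  assert (EQ : forall s, Rabs s < r -> bX s = bY s).
  { apply (fixed_unique r Mb (Phi phi x0 N K c1 H) bX bY SX SY); auto.
    intros D HD t Ht. eapply Rle_trans. apply (Phi_lip phi x0 N K c1 H m r Mb); auto; lra.
    assert (HD0 : 0 <= D) by (eapply Rle_trans; [apply Rabs_pos|apply (HD t Ht)]).
    assert ((INR N * 7 * Mb + Lg K m) * r <= (INR N * 7 * Mb + Lg K m) * d).
    { apply Rmult_le_compat_l; auto. assert (0 <= INR N * 7 * Mb) by (assert (Z := pos_INR N); repeat apply Rmult_le_pos; lra). lra. }
    nra. }
  exists r. split; auto. intros s Hs.
  rewrite <- (X_eq J phi x0 n H eps1 x Hsx Hx0 Hdx r1x Hr1xe Hppx s) by lra.
  rewrite <- (X_eq J phi x0 n H eps2 y Hsy Hy0 Hdy r1y Hr1ye Hppy s) by lra.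
  apply X_ext. intros t Ht. apply EQ. lra.
Qed.

Lemma split_nth {A} (J : list A) i d : (i < length J)%nat -> J = firstn i J ++ nth i J d :: skipn (S i) J.
Proof.
  revert i. induction J as [|a J IH]; intros i Hi; simpl in Hi. lia.
  destruct i as [|i]; simpl. reflexivity. f_equal. apply IH. lia.
Qed.

Lemma in_removed {A} (J : list A) i d p : In p (firstn i J ++ skipn (S i) J) ->
  exists j, (j < length J)%nat /\ j <> i /\ nth j J d = p.
Proof.
  revert i. induction J as [|a J IH]; intros i Hp.
  - destruct i; simpl in Hp; contradiction.
  - destruct i as [|i].
    + simpl in Hp. destruct (In_nth J p d Hp) as [k [Hk Ek]]. exists (S k). simpl. split; [lia|split; [lia|auto]].
    + simpl in Hp. destruct Hp as [<-|Hp].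
      * exists 0%nat. simpl. split; [lia|split; [lia|auto]].
      * destruct (IH i Hp) as [j [Hj [Hji Ej]]]. exists (S j). simpl. split; [lia|split; [lia|auto]].
Qed.

Lemma sing_sum_app l1 l2 x v : sing_sum (l1 ++ l2) x v = sing_sum l1 x v + sing_sum l2 x v.
Proof. induction l1; simpl. ring. fold (sing_sum (l1 ++ l2) x v) (sing_sum l1 x v). rewrite IHl1. ring. Qed.

Lemma dec_nth J i x v : (i < length J)%nat ->
  sing_sum J x v = INR (snd (nth i J (0, 0%nat))) * dot (e (fst (nth i J (0, 0%nat)))) v / dot (perp (e (fst (nth i J (0, 0%nat))))) x
    + sing_sum (firstn i J ++ skipn (S i) J) x v.
Proof.
  intros Hi. rewrite (split_nth J i (0, 0%nat) Hi) at 1. rewrite !sing_sum_app. simpl.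
  fold (sing_sum (skipn (S i) J) x v). ring.
Qed.

Lemma HJ_nth J i p : (i < length J)%nat -> In p J -> fst p = fst (nth i J (0, 0%nat)) \/ In p (firstn i J ++ skipn (S i) J).
Proof.
  intros Hi Hp. rewrite (split_nth J i (0, 0%nat) Hi) in Hp. apply in_app_or in Hp. destruct Hp as [Hp|[<-|Hp]].
  - right. apply in_or_app; auto.
  - left; auto.
  - right. apply in_or_app; auto.
Qed.

Lemma goodK_ex K x0 : (forall p, In p K -> dot (perp (e (fst p))) x0 <> 0) -> exists m, 0 < m /\ goodK K x0 m.
Proof.
  induction K as [|p K IH]; intros HK.
  - exists 1. split. lra. intros q [].
  - destruct IH as [m [Hm Hg]]. intros; apply HK; right; auto.
    assert (Hp : 0 < Rabs (dot (perp (e (fst p))) x0)) by (apply Rabs_pos_lt, HK; left; auto).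
    exists (Rmin m (Rabs (dot (perp (e (fst p))) x0))). split. apply Rmin_pos; auto.
    intros q [<-|Hq]. apply Rmin_r. eapply Rle_trans. apply Rmin_l. apply Hg; auto.
Qed.

Lemma dot_line phi x0 psi : dot (perp (e phi)) x0 = 0 ->
  dot (perp (e psi)) x0 = (cos phi * fst x0 + sin phi * snd x0) * sin (phi - psi).
Proof.
  intros H0. unfold dot, perp, e in *; simpl in *. rewrite sin_minus.
  assert (Hsc := sc1 phi).
  assert (E1 : fst x0 = cos phi * (cos phi * fst x0 + sin phi * snd x0)).
  { replace (cos phi * (cos phi * fst x0 + sin phi * snd x0)) with
      (fst x0 * (sin phi ^ 2 + cos phi ^ 2) + sin phi * (- sin phi * fst x0 + cos phi * snd x0)) by ring.
    rewrite H0, Hsc. ring. }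
  assert (E2 : snd x0 = sin phi * (cos phi * fst x0 + sin phi * snd x0)).
  { replace (sin phi * (cos phi * fst x0 + sin phi * snd x0)) with
      (snd x0 * (sin phi ^ 2 + cos phi ^ 2) - cos phi * (- sin phi * fst x0 + cos phi * snd x0)) by ring.
    rewrite H0, Hsc. ring. }
  set (c := cos phi * fst x0 + sin phi * snd x0) in *. clearbody c. rewrite E1, E2. ring.
Qed.

Lemma sin_nz d : 0 < Rabs d < PI -> sin d <> 0.
Proof.
  intros [H1 H2]. unfold Rabs in *. destruct (Rcase_abs d).
  - assert (sin (- d) > 0) by (apply sin_gt_0; lra). rewrite sin_neg in H. lra.
  - assert (sin d > 0) by (apply sin_gt_0; lra). lra.
Qed.

Ltac solve_abs := let HPI := fresh in assert (HPI := PI_RGT_0); unfold Rabs; destruct Rcase_abs; split; lra.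

Lemma type_facts (J : list (R * nat)) n : type_data J n ->
  (forall i, (i < length J)%nat -> (1 <= snd (nth i J (0%R, 0%nat)))%nat) /\
  (forall i j, (i < length J)%nat -> (j < length J)%nat -> i <> j ->
     0 < Rabs (fst (nth i J (0, 0%nat)) - fst (nth j J (0, 0%nat))) < PI).
Proof.
  intros HT. destruct HT as [n' Hn | l m' Hl Hm | c Hc | k l Hkl | c Hc].
  - split; intros; simpl in *.
    + destruct i as [|i]; simpl; lia.
    + destruct i as [|[|i]]; destruct j as [|[|j]]; simpl in *; lia.
  - split; intros; simpl in *.
    + destruct i as [|[|i]]; simpl; lia.
    + destruct i as [|[|i]]; destruct j as [|[|j]]; simpl in *; try lia; solve_abs.
  - split; intros; simpl in *.
    + destruct i as [|[|[|i]]]; simpl; lia.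
    + destruct i as [|[|[|i]]]; destruct j as [|[|[|j]]]; simpl in *; try lia; solve_abs.
  - assert (Hk : (1 <= k)%nat /\ (1 <= l)%nat).
    { destruct Hkl as [[-> ->]|[[-> ->]|[[-> ->]|[m0 [Hk1 [[_ ->]|[[_ ->]|[_ ->]]]]]]]]; lia. }
    split; intros; simpl in *.
    + destruct i as [|[|[|[|i]]]]; simpl; lia.
    + destruct i as [|[|[|[|i]]]]; destruct j as [|[|[|[|j]]]]; simpl in *; try lia; solve_abs.
  - split; intros; simpl in *.
    + destruct i as [|[|[|[|[|[|i]]]]]]; simpl; lia.
    + destruct i as [|[|[|[|[|[|i]]]]]]; destruct j as [|[|[|[|[|[|j]]]]]]; simpl in *; try lia; solve_abs.
Qed.

Lemma c_nz phi x0 : dot (perp (e phi)) x0 = 0 -> x0 <> (0, 0) -> cos phi * fst x0 + sin phi * snd x0 <> 0.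
Proof.
  intros H0 Hne Hc. apply Hne.
  assert (A := dot_line phi x0 (phi + PI / 2) H0). assert (B := dot_line phi x0 phi H0).
  rewrite Hc in A, B. unfold dot, perp, e in A, B; simpl in A, B.
  rewrite cos_plus, sin_plus, cos_PI2, sin_PI2 in A.
  destruct x0 as [a b]; simpl in *. assert (Hsc := sc1 phi).
  assert (E1 : a = a * (sin phi ^ 2 + cos phi ^ 2)) by (rewrite Hsc; ring).
  assert (E2 : b = b * (sin phi ^ 2 + cos phi ^ 2)) by (rewrite Hsc; ring).
  f_equal; nra.
Qed.

Theorem proposition3p2 :
  forall (J : list (R * nat)) (n : nat), type_data J n ->
  forall H : R -> R, (forall t, continuous H t) ->
  forall (i : nat), (i < length J)%nat ->
  forall x0 : R * R,
    dot (perp (e (fst (nth i J (0, 0%nat))))) x0 = 0 -> x0 <> (0, 0) ->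
    (exists (eps : R) (x : R -> R * R), is_local_solution J n H eps x /\ x 0 = x0 /\
        dcurve x 0 = e (fst (nth i J (0, 0%nat)) + PI / 2)) /\
    (forall (eps1 eps2 : R) (x y : R -> R * R),
        is_local_solution J n H eps1 x -> x 0 = x0 ->
        dcurve x 0 = e (fst (nth i J (0, 0%nat)) + PI / 2) ->
        is_local_solution J n H eps2 y -> y 0 = x0 ->
        dcurve y 0 = e (fst (nth i J (0, 0%nat)) + PI / 2) ->
        exists delta, 0 < delta /\ forall s, Rabs s < delta -> x s = y s).
Proof.
  intros J n HT H HHc i Hi x0 H0 Hne.
  destruct (type_facts J n HT) as [HN Hdist].
  set (K := firstn i J ++ skipn (S i) J).
  assert (Hdec := fun x v => dec_nth J i x v Hi).
  assert (HJ := fun p => HJ_nth J i p Hi).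
  assert (Hnv : forall q, In q K -> dot (perp (e (fst q))) x0 <> 0).
  { intros q Hq. destruct (in_removed J i (0, 0%nat) q Hq) as [j [Hj [Hji Ej]]].
    rewrite (dot_line _ x0 (fst q) H0). intro Z. apply Rmult_integral in Z. destruct Z as [Z|Z].
    - apply (c_nz _ x0 H0 Hne Z).
    - apply (sin_nz (fst (nth i J (0, 0%nat)) - fst q)); auto. rewrite <- Ej. apply Hdist; auto. }
  destruct (goodK_ex K x0 Hnv) as [m [Hm HK]].
  split.
  - apply (core_exist J K _ x0 (snd (nth i J (0, 0%nat))) n H m); auto.
  - intros eps1 eps2 x y Hx Hx0 Hdx Hy Hy0 Hdy.
    apply (core_unique J K _ x0 (snd (nth i J (0, 0%nat))) n H m (HN i Hi) Hm HK HHc H0 Hdec eps1 eps2 x y); auto.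
Qed.
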